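(* Consider the real ODE system $$\frac{dp}{dt}=p\,(pR(v_c)-Q(v_c)),\qquad \frac{dv_c}{dt}=-\frac{p}{4}(1+v_c^2)+\frac12(1-v_c^2),$$ with $R(v)=\frac12\left(\frac1v-v\right)$, $Q(v)=\frac12\left(\frac1v+v\right)$. Let $\lambda=1/100$, $\mu=1/5$, $p_b(v)=\frac{Q(v)+\mu}{R(v)-\lambda}$ for $0<v<\sqrt{1-2\lambda}$, and $\Omega_b=\{(v,p):0<v<\sqrt{1-2\lambda},\ p\ge p_b(v)\}$. If $(v_c(0),p(0))\in\Omega_b$, then, with $D=p(0)/(\lambda p(0)+\mu)$, for all $t>0$ in the existence interval $$p(t)>\frac{\mu De^{\mu t}}{1-\lambda De^{\mu t}},$$ and hence $p(t)\to\infty$ at some finite time $t_c$ with $0<t_c<-\frac{1}{\mu}\ln(\lambda D)$; moreover the quantities $N_2(t)^2=2\pi p(t)^2\left(\frac{1}{v_c(t)}+v_c(t)\right)$ and $N_0(t)=2|p(t)|\max\!\left(\frac{1}{v_c(t)},v_c(t)\right)$ also tend to $\infty$ as $t\to t_c^-$.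
   Context: This system is the form, with dissipation coefficient normalized to $\nu=1$, of the pole-dynamics ODEs for the generalized Constantin–Lax–Majda equation with $a=1/2$, $\sigma=1$, written in the variable $p=\omega_{-2,i}/(v_c(1-v_c^2))$. The quantities $N_2$ and $N_0$ equal the $L^2(-\pi,\pi)$ norm and the Wiener ($\ell^1$ of Fourier coefficients) norm, respectively, of the associated periodic solution $\omega(\cdot,t)$. *)

(* Defs.v *)
From Stdlib Require Import Reals.
From Coquelicot Require Import Coquelicot.
Open Scope R_scope.

Definition Rf (v : R) : R := / 2 * (/ v - v).
Definition Qf (v : R) : R := / 2 * (/ v + v).

Definition lam : R := / 100.
Definition mu : R := / 5.

Definition Fp (p v : R) : R := p * (p * Rf v - Qf v).
Definition Fv (p v : R) : R := - (p / 4) * (1 + v ^ 2) + / 2 * (1 - v ^ 2).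

Definition p_b (v : R) : R := (Qf v + mu) / (Rf v - lam).

Definition in_Omega_b (v p : R) : Prop :=
  0 < v < sqrt (1 - 2 * lam) /\ p >= p_b v.

Definition is_solution (p v : R -> R) (T : Rbar) : Prop :=
  Rbar_lt (Finite 0) T /\
  (forall t, 0 <= t -> Rbar_lt (Finite t) T -> v t <> 0) /\
  (forall t, 0 < t -> Rbar_lt (Finite t) T ->
     is_derive p t (Fp (p t) (v t)) /\ is_derive v t (Fv (p t) (v t))) /\
  filterlim p (at_right 0) (locally (p 0)) /\
  filterlim v (at_right 0) (locally (v 0)).

Definition is_maximal_solution (p v : R -> R) (T : Rbar) : Prop :=
  is_solution p v T /\
  forall (T' : Rbar) (p' v' : R -> R),
    Rbar_lt T T' -> is_solution p' v' T' ->
    ~ (forall t, 0 <= t -> Rbar_lt (Finite t) T -> p' t = p t /\ v' t = v t).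

Definition Nl2 (p v : R) : R := sqrt (2 * PI * p ^ 2 * (/ v + v)).
Definition Nwiener (p v : R) : R := 2 * Rabs p * Rmax (/ v) v.

(* Main.v *)
Require Import Defs.
From Stdlib Require Import Reals Lra Psatz.
From Coquelicot Require Import Coquelicot.
Open Scope R_scope.

Definition cc (v : R) : R := 1 - v^2 - v/50.
Definition dd (v : R) : R := 1 + v^2 + 2*v/5.
Definition Hf (p v : R) : R := cc v * p - dd v.
Definition Gf (p v : R) : R :=
  cc v * Fp p v + ((-2*v - 1/50) * p - (2*v + 2/5)) * Fv p v.

Definition Ppoly (v : R) : R := 21/50 - 437/125*v + 19583/6250*v^2 + 14798/625*v^3
  + 15413/6250*v^4 - 443/125*v^5 + 19/50*v^6.

Lemma Ppoly_pos v : 0 <= v <= 1 -> 0 < Ppoly v.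
Proof.
  intros Hv; unfold Ppoly.
  destruct (Rle_lt_dec v (1/10)); [nra|].
  destruct (Rle_lt_dec v (3/20)); [nra|].
  destruct (Rle_lt_dec v (17/100)); [nra|].
  destruct (Rle_lt_dec v (19/100)); [nra|].
  destruct (Rle_lt_dec v (1/5)); [nra|].
  destruct (Rle_lt_dec v (3/10)); [nra|].
  destruct (Rle_lt_dec v (1/2)); [nra|].
  nra.
Qed.

Lemma cc_pos_lt1 p v : 0 < v -> 0 < p -> 0 <= Hf p v -> 0 < cc v /\ v < 1.
Proof.
  unfold Hf, cc, dd; intros Hv Hp H.
  assert (0 < 1 - v^2 - v/50).
  { destruct (Rlt_le_dec 0 (1 - v^2 - v/50)); auto. nra. }
  split; auto. nra.
Qed.

Lemma Gf_identity p v : 0 < v -> cc v <> 0 -> p = dd v / cc v ->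
  Gf p v = Ppoly v / (4 * (cc v)^2).
Proof.
  intros Hv Hc ->. unfold Gf, Fp, Fv, Rf, Qf, Ppoly, dd.
  unfold cc in *. field. split; lra.
Qed.

Lemma Gf_pos p v : 0 < v -> 0 < p -> Hf p v = 0 -> 0 < Gf p v.
Proof.
  intros Hv Hp H.
  destruct (cc_pos_lt1 p v Hv Hp (Req_le _ _ (eq_sym H))) as [Hc Hv1].
  rewrite (Gf_identity p v Hv); try lra.
  - apply Rdiv_lt_0_compat. apply Ppoly_pos; lra. nra.
  - unfold Hf in H. apply (Rmult_eq_reg_r (cc v)); [|lra].
    field_simplify; lra.
Qed.

Lemma Fp_minus p v : 0 < v ->
  Fp p v - p * (lam * p + mu) = p * Hf p v / (2 * v).
Proof.
  intros Hv. unfold Fp, Hf, Rf, Qf, lam, mu, cc, dd. field. lra.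
Qed.

Lemma Omega_init v p : in_Omega_b v p -> 0 < v /\ 0 < p /\ 0 <= Hf p v /\ 1 < p.
Proof.
  unfold in_Omega_b, p_b, Rf, Qf, lam, mu. intros [[Hv1 Hv2] Hp].
  assert (Hs : sqrt (1 - 2 * / 100) < 99/100).
  { rewrite <- (sqrt_pow2 (99/100)) by lra. apply sqrt_lt_1_alt. lra. }
  assert (Hc : 0 < cc v) by (unfold cc; nra).
  assert (Heq : (/ 2 * (/ v + v) + / 5) / (/ 2 * (/ v - v) - / 100) = dd v / cc v).
  { unfold cc, dd in *. field. split; lra. }
  rewrite Heq in Hp.
  assert (Hd : 0 < dd v) by (unfold dd; nra).
  assert (Hq : dd v / cc v > 1).
  { apply Rlt_gt. apply (Rmult_lt_reg_r (cc v)); auto. field_simplify; try lra.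
    unfold dd, cc; nra. }
  repeat split; try lra.
  unfold Hf. apply Rge_le in Hp. apply (Rmult_le_compat_l (cc v)) in Hp; try lra.
  field_simplify in Hp; lra.
Qed.

Lemma MVTs (f df : R -> R) (a b : R) : a < b ->
  (forall x, a < x < b -> is_derive f x (df x)) ->
  (forall x, a <= x <= b -> continuity_pt f x) ->
  exists c, a < c < b /\ f b - f a = df c * (b - a).
Proof.
  intros Hab Hd Hc.
  assert (pr1 : forall c, a < c < b -> derivable_pt f c).
  { intros c Hc'. exists (df c). apply is_derive_Reals. auto. }
  assert (pr2 : forall c, a < c < b -> derivable_pt id c).
  { intros c _. apply derivable_pt_id. }
  destruct (MVT f id a b pr1 pr2 Hab Hc) as [c [P HP]].
  { intros; apply derivable_continuous_pt, derivable_pt_id. }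
  exists c; split; auto.
  rewrite (derive_pt_eq_0 f c (df c) (pr1 c P)) in HP.
  2:{ apply is_derive_Reals; auto. }
  rewrite (derive_pt_eq_0 id c 1 (pr2 c P)) in HP.
  2:{ apply derivable_pt_lim_id. }
  unfold id in HP. lra.
Qed.

Lemma deriv_pos_incr (f df : R -> R) (a b : R) : a < b ->
  (forall x, a < x < b -> is_derive f x (df x)) ->
  (forall x, a <= x <= b -> continuity_pt f x) ->
  (forall x, a < x < b -> 0 < df x) -> f a < f b.
Proof.
  intros Hab Hd Hc Hp. destruct (MVTs f df a b Hab Hd Hc) as [c [Hc1 Hc2]].
  specialize (Hp c Hc1). nra.
Qed.

Lemma deriv_ge_lin (f df : R -> R) (a b C : R) : a < b ->
  (forall x, a < x < b -> is_derive f x (df x)) ->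
  (forall x, a <= x <= b -> continuity_pt f x) ->
  (forall x, a < x < b -> C <= df x) -> f a + C * (b - a) <= f b.
Proof.
  intros Hab Hd Hc Hp. destruct (MVTs f df a b Hab Hd Hc) as [c [Hc1 Hc2]].
  specialize (Hp c Hc1). nra.
Qed.

Lemma deriv_nonpos_decr (f df : R -> R) (a b : R) : a <= b ->
  (forall x, a < x < b -> is_derive f x (df x)) ->
  (forall x, a <= x <= b -> continuity_pt f x) ->
  (forall x, a < x < b -> df x <= 0) -> f b <= f a.
Proof.
  intros Hab Hd Hc Hp. destruct (Req_dec a b) as [->|Hne]; [lra|].
  destruct (MVTs f df a b) as [c [Hc1 Hc2]]; auto; try lra.
  specialize (Hp c Hc1). nra.
Qed.

Lemma cont_pos_near (f : R -> R) (t : R) : continuity_pt f t -> 0 < f t ->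
  exists d, 0 < d /\ forall s, Rabs (s - t) < d -> 0 < f s.
Proof.
  intros Hc Hp. destruct (Hc (f t / 2)) as [d [Hd H]]; [lra|].
  exists d; split; auto. intros s Hs.
  destruct (Req_dec s t) as [->|Hne]; [auto|].
  specialize (H s). simpl in H. unfold R_dist in H.
  assert (Rabs (f s - f t) < f t / 2) by (apply H; unfold D_x, no_cond; repeat split; auto).
  apply Rabs_def2 in H0. lra.
Qed.

Lemma cont_neg_near (f : R -> R) (t : R) : continuity_pt f t -> f t < 0 ->
  exists d, 0 < d /\ forall s, Rabs (s - t) < d -> f s < 0.
Proof.
  intros Hc Hp.
  destruct (cont_pos_near (fun s => - f s) t) as [d [Hd H]].
  - apply continuity_pt_opp; auto.
  - lra.
  - exists d; split; auto. intros s Hs; specialize (H s Hs); simpl in H; lra.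
Qed.

Definition ext0 (f : R -> R) (t : R) : R := f (Rmax 0 t).

Lemma ext0_cont_0 (f : R -> R) :
  filterlim f (at_right 0) (locally (f 0)) -> continuity_pt (ext0 f) 0.
Proof.
  intros H. apply continuity_pt_filterlim. unfold ext0.
  rewrite Rmax_left by lra.
  intros P [eps HP].
  assert (Hl : locally (f 0) P) by (exists eps; auto).
  specialize (H P Hl). destruct H as [d Hd].
  exists d. intros y Hy. simpl.
  destruct (Rle_lt_dec y 0).
  - rewrite Rmax_left by lra. apply HP. apply ball_center.
  - rewrite Rmax_right by lra. apply Hd; auto.
Qed.

Lemma ext0_locally (f : R -> R) t : 0 < t -> locally t (fun s => ext0 f s = f s).
Proof.
  intros Ht. exists (mkposreal t Ht). intros y Hy.
  unfold ext0. rewrite Rmax_right; auto.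
  unfold ball in Hy; simpl in Hy; unfold AbsRing_ball, abs, minus, plus, opp in Hy; simpl in Hy.
  apply Rabs_def2 in Hy. lra.
Qed.

Lemma ext0_derive (f : R -> R) t l : 0 < t -> is_derive f t l -> is_derive (ext0 f) t l.
Proof.
  intros Ht H. eapply is_derive_ext_loc; [|exact H].
  generalize (ext0_locally f t Ht). apply filter_imp. intros; auto.
Qed.

Lemma ext0_cont (f : R -> R) t : 0 < t -> continuity_pt f t -> continuity_pt (ext0 f) t.
Proof.
  intros Ht H. apply continuity_pt_filterlim.
  apply continuity_pt_filterlim in H.
  unfold ext0 at 2. rewrite Rmax_right by lra.
  eapply filterlim_ext_loc; [|exact H].
  generalize (ext0_locally f t Ht). apply filter_imp. intros; auto.
Qed.

Lemma ext0_pos (f : R -> R) t : 0 <= t -> ext0 f t = f t.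
Proof. intros; unfold ext0; rewrite Rmax_right; auto. Qed.

Lemma real_ind (P : R -> Prop) (b : R) : 0 <= b ->
  P 0 ->
  (forall s, 0 < s <= b -> (forall u, 0 <= u < s -> P u) -> P s) ->
  (forall s, 0 <= s < b -> (forall u, 0 <= u <= s -> P u) ->
     exists e, 0 < e /\ forall u, s < u < s + e -> P u) ->
  forall s, 0 <= s <= b -> P s.
Proof.
  intros Hb H0 Hcl Hfw.
  set (A := fun t => 0 <= t <= b /\ forall u, 0 <= u <= t -> P u).
  assert (HA0 : A 0). { split; [lra|]. intros u Hu. replace u with 0 by lra. auto. }
  assert (Hbd : bound A). { exists b. intros t [Ht _]. lra. }
  destruct (completeness A Hbd (ex_intro _ 0 HA0)) as [m [Hub Hlub]].
  assert (Hm0 : 0 <= m) by (apply Hub; auto).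
  assert (Hmb : m <= b). { apply Hlub. intros t [Ht _]; lra. }
  assert (Hbelow : forall u, 0 <= u < m -> P u).
  { intros u Hu.
    destruct (Classical_Prop.classic (exists t, A t /\ u <= t)) as [[t [[_ Ht] Hut]]|Hn].
    - apply Ht; lra.
    - exfalso. assert (m <= u); [|lra]. apply Hlub. intros t Ht.
      destruct (Rle_lt_dec t u); auto. exfalso; apply Hn; exists t; split; auto; lra. }
  assert (HAm : A m).
  { split; [lra|]. intros u Hu. destruct (Rle_lt_dec m u).
    - replace u with m by lra. destruct (Req_dec m 0) as [->|Hne]; auto.
      apply Hcl; [lra|auto].
    - apply Hbelow; lra. }
  assert (Hmb' : m = b).
  { destruct (Rle_lt_dec b m); [lra|].
    destruct (Hfw m) as [e [He Hfe]]; [lra| apply HAm |].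
    set (t := Rmin (m + e/2) b).
    assert (A t).
    { unfold t; split; [split; [apply Rmin_glb; lra| apply Rmin_r]|].
      intros u Hu. destruct (Rle_lt_dec u m).
      - apply HAm; lra.
      - apply Hfe. split; auto. assert (u <= m + e/2) by (eapply Rle_trans; [apply Hu|apply Rmin_l]). lra. }
    assert (Htm : t <= m) by (apply Hub; auto).
    unfold t in Htm. unfold Rmin in Htm. destruct (Rle_dec (m+e/2) b); lra. }
  intros s Hs. subst m. apply HAm; lra.
Qed.

Lemma Rbar_lt_trans_le (t s : R) (T : Rbar) : t <= s -> Rbar_lt s T -> Rbar_lt t T.
Proof. destruct T; simpl; auto; lra. Qed.

Lemma sol_basic p v T : is_solution p v T ->
  (forall t, 0 <= t -> Rbar_lt t T -> continuity_pt (ext0 p) t /\ continuity_pt (ext0 v) t) /\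
  (forall t, 0 < t -> Rbar_lt t T ->
     is_derive (ext0 p) t (Fp (ext0 p t) (ext0 v t)) /\ is_derive (ext0 v) t (Fv (ext0 p t) (ext0 v t))).
Proof.
  intros [HT [Hv0 [Hd [Hp0 Hv0']]]].
  split.
  - intros t Ht HtT. destruct (Req_dec t 0) as [->|Hne].
    + split; apply ext0_cont_0; auto.
    + destruct (Hd t) as [Hdp Hdv]; [lra|auto|].
      split; apply ext0_cont; try lra; apply continuity_pt_filterlim.
      * apply (ex_derive_continuous p t). eexists; eauto.
      * apply (ex_derive_continuous v t). eexists; eauto.
  - intros t Ht HtT. rewrite !ext0_pos by lra. destruct (Hd t Ht HtT).
    split; apply ext0_derive; auto.
Qed.

Lemma Hf_deriv (f g : R -> R) (x df dg : R) : is_derive f x df -> is_derive g x dg ->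
  is_derive (fun s => Hf (f s) (g s)) x
    (cc (g x) * df + ((-2 * g x - 1/50) * f x - (2 * g x + 2/5)) * dg).
Proof.
  intros Hf' Hg'. unfold Hf, cc, dd. auto_derive.
  - repeat split; eexists; eauto.
  - change (fun x0 => f x0) with f. change (fun x0 => g x0) with g.
    rewrite (is_derive_unique _ _ _ Hf'), (is_derive_unique _ _ _ Hg'). field.
Qed.

Lemma Gf_cont (f g : R -> R) x : continuity_pt f x -> continuity_pt g x -> g x <> 0 ->
  continuity_pt (fun s => Gf (f s) (g s)) x.
Proof.
  intros Hf' Hg' Hg0. unfold Gf, Fp, Fv, Rf, Qf, cc. reg.
Qed.

Lemma Hf_cont (f g : R -> R) x : continuity_pt f x -> continuity_pt g x ->
  continuity_pt (fun s => Hf (f s) (g s)) x.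
Proof.
  intros Hf' Hg'. unfold Hf, cc, dd. reg.
Qed.

Lemma invariance p v T : is_solution p v T -> in_Omega_b (v 0) (p 0) ->
  forall t, 0 <= t -> Rbar_lt t T -> 0 < v t /\ 0 < p t /\ 0 <= Hf (p t) (v t).
Proof.
  intros Hsol Hom.
  destruct (sol_basic p v T Hsol) as [Hc Hd].
  destruct Hsol as [HT [Hv0 _]].
  destruct (Omega_init _ _ Hom) as [Hv00 [Hp00 [HH0 _]]].
  set (pe := ext0 p). set (ve := ext0 v).
  set (P := fun u => 0 < ve u /\ 0 < pe u /\ 0 <= Hf (pe u) (ve u)).
  intros t Ht HtT.
  cut (P t). { unfold P, pe, ve. rewrite !ext0_pos; auto. }
  apply (real_ind P t); auto; try lra.
  - unfold P, pe, ve. rewrite !ext0_pos by lra. auto.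
  -
    intros s [Hs0 Hst] Hbelow.
    assert (HsT : Rbar_lt s T) by (eapply Rbar_lt_trans_le; eauto).
    destruct (Hc s) as [Hcp Hcv]; [lra|auto|].
    assert (Hlim : forall (F : R -> R), continuity_pt F s -> (forall u, 0 <= u < s -> 0 <= F u) -> 0 <= F s).
    { intros F HF HFb. destruct (Rle_lt_dec 0 (F s)) as [|Hneg]; auto.
      destruct (cont_neg_near F s HF Hneg) as [d [Hd0 Hdd]].
      set (u := Rmax 0 (s - d/2)).
      assert (0 <= u < s) by (unfold u; split; [apply Rmax_l| apply Rmax_lub_lt; lra]).
      assert (F u < 0). { apply Hdd. assert (s - d/2 <= u) by apply Rmax_r.
        apply Rabs_def1; lra. }
      specialize (HFb u H). lra. }
    assert (Hve : 0 <= ve s) by (apply Hlim; auto; intros u Hu; destruct (Hbelow u Hu); lra).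
    assert (Hpe : 0 <= pe s) by (apply Hlim; auto; intros u Hu; destruct (Hbelow u Hu); lra).
    assert (HHe : 0 <= Hf (pe s) (ve s)).
    { apply (Hlim (fun u => Hf (pe u) (ve u))). apply Hf_cont; auto.
      intros u Hu; destruct (Hbelow u Hu) as [_ [_ Hh]]; auto. }
    assert (Hvs : ve s <> 0) by (unfold ve; rewrite ext0_pos by lra; apply Hv0; auto; lra).
    assert (Hps : pe s <> 0).
    { intros Hz. rewrite Hz in HHe. unfold Hf, dd in HHe. nra. }
    split; [lra|split; [lra|auto]].
  -
    intros s [Hs0 Hst] Hupto. destruct (Hupto s) as [Hvs [Hps HHs]]; [lra|].
    assert (HsT : Rbar_lt s T) by (eapply Rbar_lt_trans_le; [apply Rlt_le; exact Hst|]; auto).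
    destruct (Hc s) as [Hcp Hcv]; [lra|auto|].
    destruct (cont_pos_near ve s Hcv Hvs) as [d1 [Hd1 Hv1]].
    destruct (cont_pos_near pe s Hcp Hps) as [d2 [Hd2 Hp2]].
    destruct (Rle_lt_dec (Hf (pe s) (ve s)) 0) as [Hz|Hpos].
    + assert (Hz' : Hf (pe s) (ve s) = 0) by lra.
      assert (HG : 0 < Gf (pe s) (ve s)) by (apply Gf_pos; auto).
      destruct (cont_pos_near _ s (Gf_cont pe ve s Hcp Hcv (Rgt_not_eq _ _ Hvs)) HG) as [d3 [Hd3 HG3]].
      exists (Rmin (Rmin d1 d2) (Rmin d3 (t - s))). split.
      { repeat apply Rmin_glb_lt; lra. }
      intros u Hu.
      assert (Hm1 := Rmin_l (Rmin d1 d2) (Rmin d3 (t - s))).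
      assert (Hm2 := Rmin_r (Rmin d1 d2) (Rmin d3 (t - s))).
      assert (Hm3 := Rmin_l d1 d2). assert (Hm4 := Rmin_r d1 d2).
      assert (Hm5 := Rmin_l d3 (t-s)). assert (Hm6 := Rmin_r d3 (t-s)).
      assert (Hb : forall x, s <= x <= u -> Rabs (x - s) < Rmin (Rmin d1 d2) (Rmin d3 (t - s))).
      { intros x Hx. rewrite Rabs_right by lra. lra. }
      split; [apply Hv1; specialize (Hb u); apply Rlt_le_trans with (1 := Hb ltac:(lra)); lra|].
      split; [apply Hp2; specialize (Hb u); apply Rlt_le_trans with (1 := Hb ltac:(lra)); lra|].
      apply Rlt_le. rewrite <- Hz' at 1.
      apply (deriv_pos_incr (fun x => Hf (pe x) (ve x)) (fun x => Gf (pe x) (ve x))); [lra| | |].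
      * intros x Hx. assert (Hx0 : 0 < x) by lra.
        assert (HxT : Rbar_lt x T) by (eapply Rbar_lt_trans_le with (s := t); [lra|auto]).
        destruct (Hd x Hx0 HxT) as [Dp Dv].
        generalize (Hf_deriv pe ve x _ _ Dp Dv). unfold Gf. auto.
      * intros x Hx. apply Hf_cont; apply Hc; try lra; eapply Rbar_lt_trans_le with (s := t); auto; lra.
      * intros x Hx. apply HG3. specialize (Hb x ltac:(lra)). lra.
    + destruct (cont_pos_near _ s (Hf_cont pe ve s Hcp Hcv) Hpos) as [d3 [Hd3 HH3]].
      exists (Rmin (Rmin d1 d2) d3). split; [repeat apply Rmin_glb_lt; lra|].
      assert (Hm1 := Rmin_l (Rmin d1 d2) d3). assert (Hm2 := Rmin_r (Rmin d1 d2) d3).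
      assert (Hm3 := Rmin_l d1 d2). assert (Hm4 := Rmin_r d1 d2).
      intros u Hu. assert (Habs : Rabs (u - s) < Rmin (Rmin d1 d2) d3) by (rewrite Rabs_right; lra).
      split; [apply Hv1; lra|split; [apply Hp2; lra|apply Rlt_le, HH3; lra]].
Qed.

Lemma deriv_pos_left (f : R -> R) t l : is_derive f t l -> 0 < l ->
  exists d, 0 < d /\ forall s, t - d < s < t -> f s < f t.
Proof.
  intros H Hl. apply is_derive_Reals in H.
  destruct (H (l/2)) as [d Hd]; [lra|].
  exists d; split; [apply cond_pos|]. intros s Hs.
  specialize (Hd (s - t)). replace (t + (s - t)) with s in Hd by ring.
  assert (Hh : s - t <> 0) by lra.
  assert (Ha : Rabs (s - t) < d) by (apply Rabs_def1; lra).
  specialize (Hd Hh Ha). apply Rabs_def2 in Hd.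
  destruct Hd as [_ Hd].
  assert (Hq : (f s - f t) / (s - t) > l / 2) by lra.
  destruct (Rlt_le_dec (f s) (f t)); auto.
  exfalso. assert ((f s - f t) / (s - t) <= 0); [|lra].
  unfold Rdiv. apply Rmult_le_0_l; [lra|]. apply Rlt_le, Rinv_lt_0_compat. lra.
Qed.

Lemma H_strict p v T : is_solution p v T -> in_Omega_b (v 0) (p 0) ->
  forall t, 0 < t -> Rbar_lt t T -> 0 < Hf (p t) (v t).
Proof.
  intros Hsol Hom t Ht HtT.
  pose proof (invariance p v T Hsol Hom) as Hinv.
  destruct (sol_basic p v T Hsol) as [Hc Hd].
  destruct (Hinv t) as [Hv [Hp HH]]; [lra|auto|].
  destruct (Rle_lt_dec (Hf (p t) (v t)) 0) as [Hz|]; auto.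
  assert (Hz' : Hf (p t) (v t) = 0) by lra.
  destruct (Hd t Ht HtT) as [Dp Dv].
  pose proof (Hf_deriv _ _ _ _ _ Dp Dv) as DH.
  rewrite !ext0_pos in DH by lra.
  assert (HG : 0 < Gf (p t) (v t)) by (apply Gf_pos; auto).
  destruct (deriv_pos_left _ _ _ DH HG) as [d [Hd0 Hdd]].
  set (s := Rmax (t/2) (t - d/2)).
  assert (Hs1 : t/2 <= s) by apply Rmax_l. assert (Hs2 : t - d/2 <= s) by apply Rmax_r.
  assert (Hs3 : s < t) by (apply Rmax_lub_lt; lra).
  specialize (Hdd s ltac:(lra)). rewrite !ext0_pos in Hdd by lra.
  destruct (Hinv s) as [_ [_ Hs]]; [lra| eapply Rbar_lt_trans_le; [|exact HtT]; lra|].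
  lra.
Qed.

Lemma Fp_pos p v : 0 < v -> 0 < p -> 0 <= Hf p v -> p * (lam * p + mu) <= Fp p v.
Proof.
  intros Hv Hp HH. pose proof (Fp_minus p v Hv).
  assert (0 <= p * Hf p v / (2 * v)). { apply Rmult_le_pos; [nra|]. apply Rlt_le, Rinv_0_lt_compat; lra. }
  lra.
Qed.

Lemma p_incr p v T : is_solution p v T -> in_Omega_b (v 0) (p 0) ->
  forall a b, 0 <= a -> a < b -> Rbar_lt b T -> p a < p b.
Proof.
  intros Hsol Hom a b Ha Hab HbT.
  pose proof (invariance p v T Hsol Hom) as Hinv.
  destruct (sol_basic p v T Hsol) as [Hc Hd].
  rewrite <- (ext0_pos p a), <- (ext0_pos p b) by lra.
  apply (deriv_pos_incr _ (fun x => Fp (ext0 p x) (ext0 v x))); auto.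
  - intros x Hx. apply Hd; [lra|]. eapply Rbar_lt_trans_le; [|exact HbT]; lra.
  - intros x Hx. apply Hc; [lra|]. eapply Rbar_lt_trans_le; [|exact HbT]; lra.
  - intros x Hx. rewrite !ext0_pos by lra.
    destruct (Hinv x) as [Hv [Hp HH]]; [lra|eapply Rbar_lt_trans_le; [|exact HbT]; lra|].
    pose proof (Fp_pos _ _ Hv Hp HH). unfold lam, mu in *. nra.
Qed.

Definition Uf (f : R -> R) (s : R) : R := (/ f s + lam / mu) * exp (mu * s).

Lemma U_decr p v T : is_solution p v T -> in_Omega_b (v 0) (p 0) ->
  forall a b, 0 <= a -> a < b -> Rbar_lt b T -> Uf p b < Uf p a.
Proof.
  intros Hsol Hom a b Ha Hab HbT.
  pose proof (invariance p v T Hsol Hom) as Hinv.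
  pose proof (H_strict p v T Hsol Hom) as Hst.
  destruct (sol_basic p v T Hsol) as [Hc Hd].
  assert (Key : - Uf (ext0 p) a < - Uf (ext0 p) b).
  2:{ unfold Uf in *. rewrite !ext0_pos in Key by lra. lra. }
  apply (deriv_pos_incr (fun x => - Uf (ext0 p) x)
      (fun x => exp (mu * x) * Fp (ext0 p x) (ext0 v x) / (ext0 p x)^2
                                    - exp (mu * x) * (mu / ext0 p x + lam)) a b); auto.
  - intros x Hx. assert (HxT : Rbar_lt x T) by (eapply Rbar_lt_trans_le; [|exact HbT]; lra).
    destruct (Hd x ltac:(lra) HxT) as [Dp _].
    destruct (Hinv x) as [Hv [Hp HH]]; [lra|auto|].
    rewrite ext0_pos in Dp |- * by lra.
    unfold Uf. auto_derive.
    + repeat split; [eexists; eauto| rewrite ext0_pos by lra; lra].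
    + change (fun x0 => ext0 p x0) with (ext0 p).
      rewrite (is_derive_unique _ _ _ Dp). rewrite !ext0_pos by lra. unfold mu. field. lra.
  - intros x Hx. assert (HxT : Rbar_lt x T) by (eapply Rbar_lt_trans_le; [|exact HbT]; lra).
    destruct (Hc x ltac:(lra) HxT) as [Cp _].
    destruct (Hinv x) as [Hv [Hp HH]]; [lra|auto|].
    unfold Uf. assert (ext0 p x <> 0) by (rewrite ext0_pos by lra; lra). reg.
  - intros x Hx. assert (HxT : Rbar_lt x T) by (eapply Rbar_lt_trans_le; [|exact HbT]; lra).
    destruct (Hinv x) as [Hv [Hp HH]]; [lra|auto|].
    specialize (Hst x ltac:(lra) HxT).
    rewrite !ext0_pos by lra.
    pose proof (Fp_minus (p x) (v x) Hv) as Hm.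
    assert (0 < p x * Hf (p x) (v x) / (2 * v x)).
    { apply Rdiv_lt_0_compat; nra. }
    assert (Hex := exp_pos (mu * x)).
    replace (exp (mu * x) * Fp (p x) (v x) / p x ^ 2 - exp (mu * x) * (mu / p x + lam))
      with (exp (mu * x) / p x ^ 2 * (Fp (p x) (v x) - p x * (lam * p x + mu))) by (field; lra).
    apply Rmult_lt_0_compat; [apply Rdiv_lt_0_compat; nra|lra].
Qed.

Lemma U0 (p : R -> R) : 0 < p 0 -> Uf p 0 = / (mu * (p 0 / (lam * p 0 + mu))).
Proof.
  intros H. unfold Uf. rewrite Rmult_0_r, exp_0. unfold lam, mu. field. lra.
Qed.

Lemma lower_bound p v T : is_solution p v T -> in_Omega_b (v 0) (p 0) ->
  let D := p 0 / (lam * p 0 + mu) in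
  forall t, 0 < t -> Rbar_lt (Finite t) T ->
     0 < 1 - lam * D * exp (mu * t) /\
     p t > mu * D * exp (mu * t) / (1 - lam * D * exp (mu * t)).
Proof.
  intros Hsol Hom D t Ht HtT.
  destruct (Omega_init _ _ Hom) as [_ [Hp0 _]].
  destruct (invariance p v T Hsol Hom t) as [_ [Hpt _]]; [lra|auto|].
  pose proof (U_decr p v T Hsol Hom 0 t ltac:(lra) Ht HtT) as HU.
  rewrite U0 in HU by auto. fold D in HU.
  assert (HD : 0 < D) by (unfold D, lam, mu; apply Rdiv_lt_0_compat; lra).
  unfold Uf in HU. set (E := exp (mu * t)) in *.
  assert (HE : 0 < E) by apply exp_pos.
  assert (Hk : D * E * (mu / p t + lam) < 1).
  { apply (Rmult_lt_compat_l (mu * D)) in HU; [|unfold mu; nra].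
    rewrite Rinv_r in HU by (unfold mu; nra).
    replace (mu * D * ((/ p t + lam / mu) * E)) with (D * E * (mu / p t + lam)) in HU
      by (unfold mu; field; lra). auto. }
  assert (Hq : 0 < D * E * mu / p t).
  { apply Rdiv_lt_0_compat; auto. unfold mu; nra. }
  assert (Hk' : D * E * mu / p t + lam * D * E < 1).
  { replace (D * E * mu / p t + lam * D * E) with (D * E * (mu / p t + lam)) by (field; lra). auto. }
  split; [lra|].
  apply Rlt_gt. apply (Rmult_lt_reg_r (1 - lam * D * E)); [lra|].
  unfold Rdiv. rewrite Rmult_assoc, Rinv_l by lra. rewrite Rmult_1_r.
  assert (D * E * mu < p t * (1 - lam * D * E)); [|lra].
  apply (Rmult_lt_reg_r (/ p t)); [apply Rinv_0_lt_compat; auto|].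
  replace (p t * (1 - lam * D * E) * / p t) with (1 - lam * D * E) by (field; lra).
  unfold Rdiv in Hk'. lra.
Qed.

Lemma T_finite p v T : is_solution p v T -> in_Omega_b (v 0) (p 0) ->
  let D := p 0 / (lam * p 0 + mu) in
  exists Tf, T = Finite Tf /\ 0 < Tf < - (/ mu) * ln (lam * D).
Proof.
  intros Hsol Hom D.
  destruct (Omega_init _ _ Hom) as [_ [Hp0 _]].
  assert (HD : 0 < D) by (unfold D, lam, mu; apply Rdiv_lt_0_compat; lra).
  assert (HT0 : Rbar_lt 0 T) by (destruct Hsol; auto).
  set (t1 := match T with Finite Tf => Tf / 2 | _ => 1 end).
  assert (Ht1 : 0 < t1 /\ Rbar_lt t1 T).
  { unfold t1; destruct T; simpl in *; lra. }
  destruct Ht1 as [Ht1 Ht1T].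
  destruct (invariance p v T Hsol Hom t1) as [_ [Hpt1 _]]; [lra|auto|].
  set (K := mu * Uf p t1 / lam).
  assert (HUt1 : Uf p t1 < / (mu * D)).
  { assert (E0 : Uf p 0 = / (mu * D)) by (apply U0; auto). rewrite <- E0. apply (U_decr p v T Hsol Hom); auto; lra. }
  assert (HUpos : 0 < Uf p t1).
  { unfold Uf. apply Rmult_lt_0_compat; [|apply exp_pos].
    unfold lam, mu. assert (0 < / p t1) by (apply Rinv_0_lt_compat; auto). lra. }
  assert (HK : 0 < K) by (unfold K, lam, mu; apply Rdiv_lt_0_compat; lra).
  assert (HKlt : K < / (lam * D)).
  { unfold K. apply (Rmult_lt_reg_l (lam / mu)); [unfold lam, mu; lra|].
    replace (lam / mu * (mu * Uf p t1 / lam)) with (Uf p t1) by (unfold lam, mu; field).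
    replace (lam / mu * / (lam * D)) with (/ (mu * D)) by (unfold lam, mu; field; lra). auto. }
  assert (Hbound : forall t, t1 <= t -> Rbar_lt t T -> t < ln K / mu).
  { intros t Ht HtT.
    destruct (invariance p v T Hsol Hom t) as [_ [Hpt _]]; [lra|auto|].
    assert (HUt : Uf p t <= Uf p t1).
    { destruct (Req_dec t t1) as [->|Hne]; [lra|].
      apply Rlt_le, (U_decr p v T Hsol Hom); auto; lra. }
    assert (Hlow : lam / mu * exp (mu * t) < Uf p t).
    { unfold Uf. assert (0 < / p t) by (apply Rinv_0_lt_compat; auto).
      assert (Hex := exp_pos (mu * t)). nra. }
    assert (Hex : exp (mu * t) < K).
    { unfold K. apply (Rmult_lt_reg_l (lam / mu)); [unfold lam, mu; lra|].
      replace (lam / mu * (mu * Uf p t1 / lam)) with (Uf p t1) by (unfold lam, mu; field). lra. }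
    apply ln_increasing in Hex; [|apply exp_pos]. rewrite ln_exp in Hex.
    unfold mu in *. apply (Rmult_lt_reg_l (/5)); [lra|]. field_simplify. lra. }
  assert (HlnK : ln K / mu < - (/ mu) * ln (lam * D)).
  { assert (Hl : ln (/ (lam * D)) = - ln (lam * D)) by (apply ln_Rinv; unfold lam; nra).
    apply ln_increasing in HKlt; auto. rewrite Hl in HKlt.
    replace (ln K / mu) with (5 * ln K) by (unfold mu; field).
    replace (- / mu * ln (lam * D)) with (5 * (- ln (lam * D))) by (unfold mu; field). lra. }
  destruct T as [Tf| |]; simpl in *.
  - exists Tf; split; auto. split; [lra|].
    destruct (Rle_lt_dec Tf (ln K / mu)); [lra|].
    set (t := Rmax t1 ((ln K / mu + Tf) / 2)).
    assert (t1 <= t) by apply Rmax_l. assert ((ln K / mu + Tf)/2 <= t) by apply Rmax_r.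
    assert (t < Tf) by (apply Rmax_lub_lt; unfold t1 in *; lra).
    specialize (Hbound t H H1). lra.
  - exfalso. set (t := Rmax t1 (ln K / mu + 1)).
    assert (t1 <= t) by apply Rmax_l. assert (ln K / mu + 1 <= t) by apply Rmax_r.
    specialize (Hbound t H I). lra.
  - contradiction.
Qed.

Lemma cpt_cont (f : R -> R) x : continuity_pt f x -> continuous f x.
Proof. intros H. apply continuity_pt_filterlim in H. exact H. Qed.

Lemma cont_cpt (f : R -> R) x : continuous f x -> continuity_pt f x.
Proof. intros H. apply continuity_pt_filterlim. exact H. Qed.

Lemma ex_RInt_cpt (f : R -> R) a b : a <= b -> (forall z, a <= z <= b -> continuity_pt f z) ->
  ex_RInt f a b.
Proof.
  intros Hab H. apply (@ex_RInt_continuous R_CompleteNormedModule). intros z Hz.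
  rewrite Rmin_left, Rmax_right in Hz by lra. apply cpt_cont, H; auto.
Qed.

Lemma RInt_bound (f : R -> R) a b C : a <= b -> (forall z, a <= z <= b -> continuity_pt f z) ->
  (forall z, a <= z <= b -> Rabs (f z) <= C) -> Rabs (RInt f a b) <= (b - a) * C.
Proof.
  intros Hab Hc Hb. apply abs_RInt_le_const; auto. apply ex_RInt_cpt; auto.
Qed.

Lemma RInt_minus' (f g : R -> R) a b : a <= b ->
  (forall z, a <= z <= b -> continuity_pt f z) ->
  (forall z, a <= z <= b -> continuity_pt g z) ->
  RInt (fun x => f x - g x) a b = RInt f a b - RInt g a b.
Proof.
  intros Hab Hf Hg. apply is_RInt_unique.
  apply (@is_RInt_minus R_CompleteNormedModule f g); apply RInt_correct; apply ex_RInt_cpt; auto.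
Qed.

Lemma RInt_Chasles' (f : R -> R) a b c : (forall z, continuity_pt f z) ->
  RInt f a c - RInt f a b = RInt f b c.
Proof.
  intros Hf. rewrite <- (RInt_Chasles f a b c).
  - simpl. unfold plus; simpl. ring.
  - apply (@ex_RInt_continuous R_CompleteNormedModule); intros; apply cpt_cont; auto.
  - apply (@ex_RInt_continuous R_CompleteNormedModule); intros; apply cpt_cont; auto.
Qed.

Lemma RInt_bound_abs (f : R -> R) a b C : (forall z, continuity_pt f z) ->
  (forall z, Rabs (f z) <= C) -> Rabs (RInt f a b) <= Rabs (b - a) * C.
Proof.
  intros Hc Hb. destruct (Rle_lt_dec a b).
  - rewrite (Rabs_right (b - a)) by lra. apply RInt_bound; auto.
  - rewrite <- opp_RInt_swap. 2:{ apply (@ex_RInt_continuous R_CompleteNormedModule); intros; apply cpt_cont; auto. }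
    unfold opp; simpl. rewrite Rabs_Ropp. rewrite (Rabs_left (b - a)) by lra.
    replace (- (b - a)) with (a - b) by ring. apply RInt_bound; auto; lra.
Qed.

Lemma RInt_derive_cont (f : R -> R) a t : (forall z, continuity_pt f z) ->
  is_derive (fun b => RInt f a b) t (f t).
Proof.
  intros Hc. apply (@is_derive_RInt R_CompleteNormedModule f (fun b => RInt f a b) a t).
  - apply filter_forall. intros b. apply RInt_correct.
    apply (@ex_RInt_continuous R_CompleteNormedModule); intros; apply cpt_cont; auto.
  - apply cpt_cont; auto.
Qed.

Lemma cont_everywhere_RInt (f : R -> R) a c : (forall z, continuity_pt f z) ->
  forall t, continuity_pt (fun b => c + RInt f a b) t.
Proof.
  intros Hc t. apply (continuity_pt_plus (fun _ => c) (fun b => RInt f a b)).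
  - apply continuity_pt_const. intros ? ?; reflexivity.
  - apply cont_cpt. apply (ex_derive_continuous (fun b => RInt f a b)).
    exists (f t). apply RInt_derive_cont; auto.
Qed.

Lemma Rabs_def2b (a b : R) : Rabs a <= b -> - b <= a <= b.
Proof. unfold Rabs; destruct (Rcase_abs a); lra. Qed.

Lemma cauchy_geom (s : nat -> R) (K : R) : 0 <= K ->
  (forall n, Rabs (s (S n) - s n) <= K * (/2)^n) ->
  exists l : R, is_lim_seq s l /\ forall n, Rabs (l - s n) <= 2 * K * (/2)^n.
Proof.
  intros HK Hs.
  set (lo := fun n => s n - 2 * K * (/2)^n).
  set (up := fun n => s n + 2 * K * (/2)^n).
  assert (Hlo : forall n, lo n <= lo (S n)).
  { intros n; unfold lo; simpl. specialize (Hs n). apply Rabs_def2b in Hs.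
    assert (0 <= (/2)^n) by (apply pow_le; lra). nra. }
  assert (Hup : forall n, up (S n) <= up n).
  { intros n; unfold up; simpl. specialize (Hs n). apply Rabs_def2b in Hs.
    assert (0 <= (/2)^n) by (apply pow_le; lra). nra. }
  assert (Hg : is_lim_seq (fun n => (/2)^n) 0).
  { apply is_lim_seq_geom. rewrite Rabs_right; lra. }
  assert (Hdiff : is_lim_seq (fun n => up n - lo n) 0).
  { apply is_lim_seq_ext with (fun n => 4 * K * (/2)^n).
    { intros n; unfold up, lo; ring. }
    replace (Finite 0) with (Rbar_mult (4*K) 0) by (simpl; f_equal; ring).
    apply is_lim_seq_scal_l; auto. }
  destruct (ex_lim_seq_adj lo up Hlo Hup Hdiff) as [[l Hl] [[l' Hl'] Heq]].
  assert (Hll : l = l').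
  { rewrite (is_lim_seq_unique _ _ Hl), (is_lim_seq_unique _ _ Hl') in Heq. injection Heq; auto. }
  subst l'.
  exists l. split.
  - apply is_lim_seq_ext with (fun n => lo n + 2 * K * (/2)^n).
    { intros n; unfold lo; ring. }
    assert (H2 : is_lim_seq (fun n => 2 * K * (/2)^n) 0).
    { replace (Finite 0) with (Rbar_mult (2*K) 0) by (simpl; f_equal; ring).
      apply is_lim_seq_scal_l; auto. }
    replace (Finite l) with (Finite (l + 0)) by (f_equal; ring).
    apply is_lim_seq_plus'; auto.
  - assert (Hmono_lo : forall n m, (n <= m)%nat -> lo n <= lo m).
    { intros n m Hnm. induction Hnm; [lra|]. eapply Rle_trans; eauto. }
    assert (Hmono_up : forall n m, (n <= m)%nat -> up m <= up n).
    { intros n m Hnm. induction Hnm; [lra|]. eapply Rle_trans; [apply Hup|]; eauto. }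
    assert (Hlu : forall n, lo n <= up n).
    { intros n; unfold lo, up. assert (0 <= (/2)^n) by (apply pow_le; lra). nra. }
    assert (Hlu2 : forall n m, lo n <= up m).
    { intros n m. destruct (Nat.le_ge_cases n m) as [Hnm|Hnm].
      - eapply Rle_trans; [apply (Hmono_lo n m Hnm)|apply Hlu].
      - eapply Rle_trans; [apply Hlu|apply (Hmono_up m n Hnm)]. }
    intros n.
    assert (H1 : Rbar_le (lo n) l).
    { apply (is_lim_seq_le (fun _ => lo n) up); auto. apply is_lim_seq_const. }
    assert (H2 : Rbar_le l (up n)).
    { apply (is_lim_seq_le lo (fun _ => up n)); auto. apply is_lim_seq_const. }
    simpl in H1, H2. unfold lo, up in *. cbv beta in *. simpl. unfold Rabs; destruct (Rcase_abs (l - s n)); lra.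
Qed.

Lemma le_geom_zero (a C : R) : (forall n, a <= C * (/2)^n) -> a <= 0.
Proof.
  intros H.
  assert (Hg : is_lim_seq (fun n => C * (/2)^n) (Rbar_mult C 0)).
  { apply is_lim_seq_scal_l. apply is_lim_seq_geom. rewrite Rabs_right; lra. }
  assert (Hle := is_lim_seq_le (fun _ => a) _ a _ H (is_lim_seq_const a) Hg).
  simpl in Hle. rewrite Rmult_0_r in Hle. auto.
Qed.

Lemma RInt_derive_const (f : R -> R) a c t : (forall z, continuity_pt f z) ->
  is_derive (fun b => c + RInt f a b) t (f t).
Proof.
  intros Hc. apply is_derive_Reals.
  replace (f t) with (0 + f t) by ring.
  apply (derivable_pt_lim_plus (fun _ => c) (fun b => RInt f a b)).
  - apply derivable_pt_lim_const.
  - apply is_derive_Reals. apply RInt_derive_cont; auto.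
Qed.

Lemma loc_interval (a b t : R) : a < t < b -> locally t (fun s => a < s < b).
Proof.
  intros Ht. assert (Hp : 0 < Rmin (t - a) (b - t)) by (apply Rmin_glb_lt; lra).
  exists (mkposreal _ Hp). intros y Hy.
  unfold ball in Hy; simpl in Hy; unfold AbsRing_ball, abs, minus, plus, opp in Hy; simpl in Hy.
  apply Rabs_def2 in Hy. assert (H1 := Rmin_l (t-a) (b-t)). assert (H2 := Rmin_r (t-a) (b-t)). lra.
Qed.

Lemma lip_cont (f : R -> R) (K : R) : 0 < K -> (forall s t, Rabs (f s - f t) <= K * Rabs (s - t)) ->
  forall t, continuity_pt f t.
Proof.
  intros HK Hl t eps Heps. exists (eps / K). split; [apply Rdiv_lt_0_compat; auto|].
  intros x [_ Hx]. simpl in *. unfold R_dist in *.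
  eapply Rle_lt_trans; [apply Hl|].
  apply (Rmult_lt_compat_l K) in Hx; auto. field_simplify in Hx; lra.
Qed.

Definition inB (a1 a2 b1 b2 a b : R) : Prop := a1 <= a <= a2 /\ b1 <= b <= b2.

Definition good_field (F1 F2 : R -> R -> R) (a1 a2 b1 b2 L M : R) : Prop :=
  0 < L /\ 0 < M /\
  (forall (f g : R -> R) t, continuity_pt f t -> continuity_pt g t -> inB a1 a2 b1 b2 (f t) (g t) ->
      continuity_pt (fun s => F1 (f s) (g s)) t /\ continuity_pt (fun s => F2 (f s) (g s)) t) /\
  (forall a b, inB a1 a2 b1 b2 a b -> Rabs (F1 a b) <= M /\ Rabs (F2 a b) <= M) /\
  (forall a b a' b', inB a1 a2 b1 b2 a b -> inB a1 a2 b1 b2 a' b' ->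
      Rabs (F1 a b - F1 a' b') <= L * (Rabs (a - a') + Rabs (b - b')) /\
      Rabs (F2 a b - F2 a' b') <= L * (Rabs (a - a') + Rabs (b - b'))).

Definition clamp (t0 h s : R) : R := Rmax t0 (Rmin s (t0 + h)).

Fixpoint pic (F1 F2 : R -> R -> R) (t0 h x0 y0 : R) (n : nat) : (R -> R) * (R -> R) :=
  match n with
  | O => (fun _ => x0, fun _ => y0)
  | S n => let fg := pic F1 F2 t0 h x0 y0 n in
      (fun t => x0 + RInt (fun s => F1 (fst fg (clamp t0 h s)) (snd fg (clamp t0 h s))) t0 t,
       fun t => y0 + RInt (fun s => F2 (fst fg (clamp t0 h s)) (snd fg (clamp t0 h s))) t0 t)
  end.

Lemma clamp_in t0 h s : 0 < h -> t0 <= clamp t0 h s <= t0 + h.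
Proof.
  intros Hh; unfold clamp. split; [apply Rmax_l|].
  apply Rmax_lub; [lra|apply Rmin_r].
Qed.

Lemma clamp_id t0 h s : t0 <= s <= t0 + h -> clamp t0 h s = s.
Proof.
  intros Hs; unfold clamp. rewrite Rmin_left by lra. rewrite Rmax_right by lra. auto.
Qed.

Lemma clamp_lip t0 h s s' : 0 < h -> Rabs (clamp t0 h s - clamp t0 h s') <= Rabs (s - s').
Proof.
  intros Hh. unfold clamp, Rmax, Rmin.
  destruct (Rle_dec s (t0 + h)); destruct (Rle_dec s' (t0 + h));
  repeat (match goal with |- context [Rle_dec ?a ?b] => destruct (Rle_dec a b) end);
  unfold Rabs; repeat (match goal with |- context [Rcase_abs ?a] => destruct (Rcase_abs a) end); lra.
Qed.

Lemma clamp_cont t0 h s : 0 < h -> continuity_pt (clamp t0 h) s.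
Proof.
  intros Hh. apply (lip_cont _ 1); [lra|]. intros; rewrite Rmult_1_l; apply clamp_lip; auto.
Qed.

Lemma comp_cont (f : R -> R) t0 h s : 0 < h -> (forall z, continuity_pt f z) ->
  continuity_pt (fun x => f (clamp t0 h x)) s.
Proof.
  intros Hh Hf. apply (continuity_pt_comp (clamp t0 h) f s); [apply clamp_cont; auto|apply Hf].
Qed.

Lemma addK (a b : R) : a + b - a = b.
Proof. ring. Qed.

Lemma picard (F1 F2 : R -> R -> R) a1 a2 b1 b2 L M t0 h x0 y0 r :
  good_field F1 F2 a1 a2 b1 b2 L M ->
  0 < r -> 0 < h -> M * h <= r -> 4 * L * h <= 1 ->
  a1 <= x0 - r -> x0 + r <= a2 -> b1 <= y0 - r -> y0 + r <= b2 ->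
  exists X Y : R -> R,
    X t0 = x0 /\ Y t0 = y0 /\
    (forall t, t0 <= t <= t0 + h -> Rabs (X t - x0) <= r /\ Rabs (Y t - y0) <= r) /\
    (forall t, t0 < t < t0 + h -> is_derive X t (F1 (X t) (Y t)) /\ is_derive Y t (F2 (X t) (Y t))) /\
    (forall (p q : R -> R) t1, t0 < t1 <= t0 + h ->
       (forall t, t0 <= t < t1 -> inB a1 a2 b1 b2 (p t) (q t) /\
           is_derive p t (F1 (p t) (q t)) /\ is_derive q t (F2 (p t) (q t))) ->
       p t0 = x0 -> q t0 = y0 ->
       forall t, t0 <= t < t1 -> p t = X t /\ q t = Y t).
Proof.
  intros [HL [HM [Hcont [Hbd Hlip]]]] Hr Hh HMh HLh Ha1 Ha2 Hb1 Hb2.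
  set (f := fun n => fst (pic F1 F2 t0 h x0 y0 n)).
  set (g := fun n => snd (pic F1 F2 t0 h x0 y0 n)).
  set (cl := clamp t0 h).
  set (I1 := fun n s => F1 (f n (cl s)) (g n (cl s))).
  set (I2 := fun n s => F2 (f n (cl s)) (g n (cl s))).
  assert (Ef : forall n t, f (S n) t = x0 + RInt (I1 n) t0 t) by reflexivity.
  assert (Eg : forall n t, g (S n) t = y0 + RInt (I2 n) t0 t) by reflexivity.
  assert (Ef0 : forall t, f O t = x0) by reflexivity.
  assert (Eg0 : forall t, g O t = y0) by reflexivity.
  assert (Hcl : forall s, t0 <= cl s <= t0 + h) by (intros; apply clamp_in; auto).
  assert (HinB_of : forall a b, Rabs (a - x0) <= r -> Rabs (b - y0) <= r -> inB a1 a2 b1 b2 a b).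
  { intros a b Ha Hb. apply Rabs_def2b in Ha; apply Rabs_def2b in Hb. unfold inB; lra. }
  assert (Inv : forall n, (forall t, continuity_pt (f n) t /\ continuity_pt (g n) t) /\
          (forall t, t0 <= t <= t0 + h ->
             Rabs (f n t - x0) <= M * (t - t0) /\ Rabs (g n t - y0) <= M * (t - t0))).
  { induction n as [|n [IHc IHb]].
    - split.
      + intros t. split; apply continuity_pt_const; intros ? ?; reflexivity.
      + intros t Ht. rewrite Ef0, Eg0. replace (x0 - x0) with 0 by ring. replace (y0 - y0) with 0 by ring. rewrite Rabs_R0. split; nra.
    - assert (HB : forall s, inB a1 a2 b1 b2 (f n (cl s)) (g n (cl s))).
      { intros s. destruct (IHb (cl s) (Hcl s)) as [H1 H2]. specialize (Hcl s).
        apply HinB_of; nra. }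
      assert (HI : forall s, continuity_pt (I1 n) s /\ continuity_pt (I2 n) s).
      { intros s. apply (Hcont (fun x => f n (cl x)) (fun x => g n (cl x)) s).
        - apply comp_cont; auto. intros z; apply IHc.
        - apply comp_cont; auto. intros z; apply IHc.
        - apply HB. }
      assert (HIb : forall s, Rabs (I1 n s) <= M /\ Rabs (I2 n s) <= M) by (intros; apply Hbd; apply HB).
      split.
      + intros t. split.
        * change (continuity_pt (fun t => x0 + RInt (I1 n) t0 t) t).
          apply cont_everywhere_RInt; intros; apply HI.
        * change (continuity_pt (fun t => y0 + RInt (I2 n) t0 t) t).
          apply cont_everywhere_RInt; intros; apply HI.
      + intros t Ht. rewrite Ef, Eg.
        rewrite !addK.
        split; rewrite Rmult_comm; apply RInt_bound; try lra; intros; first [apply HI | apply HIb]. }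
  assert (HB : forall n s, inB a1 a2 b1 b2 (f n (cl s)) (g n (cl s))).
  { intros n s. destruct (proj2 (Inv n) (cl s) (Hcl s)) as [H1 H2]. specialize (Hcl s).
    apply HinB_of; nra. }
  assert (HI : forall n s, continuity_pt (I1 n) s /\ continuity_pt (I2 n) s).
  { intros n s. apply (Hcont (fun x => f n (cl x)) (fun x => g n (cl x)) s).
    - apply comp_cont; auto. intros z; apply (proj1 (Inv n)).
    - apply comp_cont; auto. intros z; apply (proj1 (Inv n)).
    - apply HB. }
  assert (HIb : forall n s, Rabs (I1 n s) <= M /\ Rabs (I2 n s) <= M) by (intros; apply Hbd; apply HB).
  assert (Delta : forall n t, t0 <= t <= t0 + h ->
            Rabs (f (S n) t - f n t) + Rabs (g (S n) t - g n t) <= 2 * r * (/2)^n).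
  { induction n as [|n IH]; intros t Ht.
    - simpl pow. rewrite Ef0, Eg0. destruct (proj2 (Inv 1%nat) t Ht) as [H1 H2]. nra.
    - rewrite (Ef (S n)), (Ef n), (Eg (S n)), (Eg n).
      replace (x0 + RInt (I1 (S n)) t0 t - (x0 + RInt (I1 n) t0 t))
        with (RInt (I1 (S n)) t0 t - RInt (I1 n) t0 t) by ring.
      replace (y0 + RInt (I2 (S n)) t0 t - (y0 + RInt (I2 n) t0 t))
        with (RInt (I2 (S n)) t0 t - RInt (I2 n) t0 t) by ring.
      rewrite <- !RInt_minus'; try lra; try (intros; apply HI).
      set (q := (/2)^n). assert (Hq : 0 < q) by (apply pow_lt; lra).
      assert (Hs : forall s, t0 <= s <= t -> Rabs (I1 (S n) s - I1 n s) <= L * (2 * r * q)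
                     /\ Rabs (I2 (S n) s - I2 n s) <= L * (2 * r * q)).
      { intros s Hs. specialize (IH (cl s) (Hcl s)).
        destruct (Hlip _ _ _ _ (HB (S n) s) (HB n s)) as [H1 H2].
        split; (eapply Rle_trans; [eassumption|]); apply Rmult_le_compat_l; unfold q; lra. }
      assert (B1 : Rabs (RInt (fun x => I1 (S n) x - I1 n x) t0 t) <= (t - t0) * (L * (2 * r * q))).
      { apply RInt_bound; try lra.
        - intros; apply continuity_pt_minus; apply HI.
        - intros; apply Hs; auto. }
      assert (B2 : Rabs (RInt (fun x => I2 (S n) x - I2 n x) t0 t) <= (t - t0) * (L * (2 * r * q))).
      { apply RInt_bound; try lra.
        - intros; apply continuity_pt_minus; apply HI.
        - intros; apply Hs; auto. }
      simpl pow. fold q.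
      assert ((t - t0) * (L * (2 * r * q)) <= r * q / 2).
      { assert (0 <= t - t0 <= h) by lra.
        assert (HLt : 4 * L * (t - t0) <= 1) by nra.
        assert (0 < r * q) by nra. nra. }
      lra. }
  assert (Lf : forall t, exists l : R, is_lim_seq (fun n => f n (cl t)) l /\
                 forall n, Rabs (l - f n (cl t)) <= 2 * (2 * r) * (/2)^n).
  { intros t. apply cauchy_geom; [lra|]. intros n. pose proof (Delta n (cl t) (Hcl t)).
    pose proof (Rabs_pos (g (S n) (cl t) - g n (cl t))). lra. }
  assert (Lg : forall t, exists l : R, is_lim_seq (fun n => g n (cl t)) l /\
                 forall n, Rabs (l - g n (cl t)) <= 2 * (2 * r) * (/2)^n).
  { intros t. apply cauchy_geom; [lra|]. intros n. pose proof (Delta n (cl t) (Hcl t)).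
    pose proof (Rabs_pos (f (S n) (cl t) - f n (cl t))). lra. }
  set (X := fun t => real (Lim_seq (fun n => f n (cl t)))).
  set (Y := fun t => real (Lim_seq (fun n => g n (cl t)))).
  assert (XB : forall n t, Rabs (X t - f n (cl t)) <= 4 * r * (/2)^n).
  { intros n t. destruct (Lf t) as [l [Hl Hb]]. unfold X. rewrite (is_lim_seq_unique _ _ Hl). simpl.
    specialize (Hb n). lra. }
  assert (YB : forall n t, Rabs (Y t - g n (cl t)) <= 4 * r * (/2)^n).
  { intros n t. destruct (Lg t) as [l [Hl Hb]]. unfold Y. rewrite (is_lim_seq_unique _ _ Hl). simpl.
    specialize (Hb n). lra. }
  assert (Hclcl : forall t, cl (cl t) = cl t) by (intros; apply clamp_id, Hcl).
  assert (Xcl : forall t, X (cl t) = X t) by (intros; unfold X; rewrite Hclcl; auto).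
  assert (Ycl : forall t, Y (cl t) = Y t) by (intros; unfold Y; rewrite Hclcl; auto).
  assert (Xbd : forall t, Rabs (X t - x0) <= M * (cl t - t0) /\ Rabs (Y t - y0) <= M * (cl t - t0)).
  { intros t.
    split; apply (Rplus_le_reg_r (- (M * (cl t - t0)))); rewrite Rplus_opp_r;
      apply (le_geom_zero _ (4 * r)); intros n; destruct (proj2 (Inv n) (cl t) (Hcl t)) as [H1 H2].
    - pose proof (Rabs_triang (X t - f n (cl t)) (f n (cl t) - x0)) as Ht.
      replace (X t - f n (cl t) + (f n (cl t) - x0)) with (X t - x0) in Ht by ring.
      pose proof (XB n t). lra.
    - pose proof (Rabs_triang (Y t - g n (cl t)) (g n (cl t) - y0)) as Ht.
      replace (Y t - g n (cl t) + (g n (cl t) - y0)) with (Y t - y0) in Ht by ring.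
      pose proof (YB n t). lra. }
  assert (XinB : forall t, inB a1 a2 b1 b2 (X t) (Y t)).
  { intros t. destruct (Xbd t). specialize (Hcl t). apply HinB_of; nra. }
  assert (Flip : forall n s t, Rabs (f n (cl t) - f n (cl s)) <= M * Rabs (t - s) /\
                               Rabs (g n (cl t) - g n (cl s)) <= M * Rabs (t - s)).
  { intros n s t. pose proof (clamp_lip t0 h t s Hh) as Hcls. fold cl in Hcls.
    pose proof (Rabs_pos (t - s)).
    destruct n as [|n].
    - rewrite !Ef0, !Eg0. replace (x0 - x0) with 0 by ring. replace (y0 - y0) with 0 by ring. rewrite Rabs_R0. split; nra.
    - rewrite !Ef, !Eg.
      replace (x0 + RInt (I1 n) t0 (cl t) - (x0 + RInt (I1 n) t0 (cl s)))
        with (RInt (I1 n) t0 (cl t) - RInt (I1 n) t0 (cl s)) by ring.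
      replace (y0 + RInt (I2 n) t0 (cl t) - (y0 + RInt (I2 n) t0 (cl s)))
        with (RInt (I2 n) t0 (cl t) - RInt (I2 n) t0 (cl s)) by ring.
      rewrite !RInt_Chasles' by (intros; apply HI).
      split; (eapply Rle_trans; [apply RInt_bound_abs; [intros; apply HI| intros; apply HIb]|]);
        rewrite Rmult_comm; apply Rmult_le_compat_l; lra. }
  assert (Xlip : forall s t, Rabs (X t - X s) <= M * Rabs (t - s) /\ Rabs (Y t - Y s) <= M * Rabs (t - s)).
  { intros s t. split; apply (Rplus_le_reg_r (- (M * Rabs (t - s)))); rewrite Rplus_opp_r;
      apply (le_geom_zero _ (8 * r)); intros n; destruct (Flip n s t) as [H1 H2].
    - pose proof (XB n t). pose proof (XB n s).
      pose proof (Rabs_triang (X t - f n (cl t)) (f n (cl t) - X s)) as T1.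
      pose proof (Rabs_triang (f n (cl t) - f n (cl s)) (f n (cl s) - X s)) as T2.
      replace (X t - f n (cl t) + (f n (cl t) - X s)) with (X t - X s) in T1 by ring.
      replace (f n (cl t) - f n (cl s) + (f n (cl s) - X s)) with (f n (cl t) - X s) in T2 by ring.
      rewrite <- Rabs_Ropp in H0. replace (- (X s - f n (cl s))) with (f n (cl s) - X s) in H0 by ring.
      lra.
    - pose proof (YB n t). pose proof (YB n s).
      pose proof (Rabs_triang (Y t - g n (cl t)) (g n (cl t) - Y s)) as T1.
      pose proof (Rabs_triang (g n (cl t) - g n (cl s)) (g n (cl s) - Y s)) as T2.
      replace (Y t - g n (cl t) + (g n (cl t) - Y s)) with (Y t - Y s) in T1 by ring.
      replace (g n (cl t) - g n (cl s) + (g n (cl s) - Y s)) with (g n (cl t) - Y s) in T2 by ring.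
      rewrite <- Rabs_Ropp in H0. replace (- (Y s - g n (cl s))) with (g n (cl s) - Y s) in H0 by ring.
      lra. }
  assert (Xc : forall t, continuity_pt X t).
  { apply (lip_cont X M HM). intros s t. apply (Xlip t s). }
  assert (Yc : forall t, continuity_pt Y t).
  { apply (lip_cont Y M HM). intros s t. apply (Xlip t s). }
  set (J1 := fun s => F1 (X s) (Y s)).
  set (J2 := fun s => F2 (X s) (Y s)).
  assert (HJ : forall s, continuity_pt J1 s /\ continuity_pt J2 s).
  { intros s. apply Hcont; auto. }
  assert (Xint : forall t, t0 <= t <= t0 + h -> X t = x0 + RInt J1 t0 t /\ Y t = y0 + RInt J2 t0 t).
  { intros t Ht.
    assert (Hclt : cl t = t) by (apply clamp_id; auto).
    assert (Main : forall n, Rabs (X t - (x0 + RInt J1 t0 t)) <= (4 * r + 8 * r * h * L) * (/2)^n /\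
                             Rabs (Y t - (y0 + RInt J2 t0 t)) <= (4 * r + 8 * r * h * L) * (/2)^n).
    { intros n. set (q := (/2)^n). assert (Hq : 0 < q) by (apply pow_lt; lra).
      assert (Hs : forall s, Rabs (I1 n s - J1 s) <= L * (8 * r * q) /\ Rabs (I2 n s - J2 s) <= L * (8 * r * q)).
      { intros s. unfold I1, I2, J1, J2. rewrite <- (Xcl s), <- (Ycl s).
        destruct (Hlip _ _ _ _ (HB n s) (XinB (cl s))) as [H1 H2].
        pose proof (XB n (cl s)) as H3. pose proof (YB n (cl s)) as H4.
        rewrite Hclcl in H3, H4. rewrite Rabs_minus_sym in H3, H4. fold q in H3, H4.
        split; (eapply Rle_trans; [eassumption|]); apply Rmult_le_compat_l; lra. }
      assert (B1 : Rabs (RInt (fun x => I1 n x - J1 x) t0 t) <= (t - t0) * (L * (8 * r * q))).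
      { apply RInt_bound; try lra.
        - intros; apply continuity_pt_minus; [apply HI|apply HJ].
        - intros; apply Hs. }
      assert (B2 : Rabs (RInt (fun x => I2 n x - J2 x) t0 t) <= (t - t0) * (L * (8 * r * q))).
      { apply RInt_bound; try lra.
        - intros; apply continuity_pt_minus; [apply HI|apply HJ].
        - intros; apply Hs. }
      rewrite RInt_minus' in B1, B2; try lra; try (intros; apply HI); try (intros; apply HJ).
      pose proof (XB (S n) t) as X1. pose proof (YB (S n) t) as Y1. rewrite Hclt in X1, Y1.
      rewrite Ef in X1. rewrite Eg in Y1. simpl pow in X1, Y1. fold q in X1, Y1.
      assert (Hb : (t - t0) * (L * (8 * r * q)) <= 8 * r * h * L * q).
      { assert (0 <= (h - (t - t0)) * (L * (r * q))) by (apply Rmult_le_pos; [lra| apply Rmult_le_pos; nra]). nra. }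
      split.
      - pose proof (Rabs_triang (X t - (x0 + RInt (I1 n) t0 t)) (RInt (I1 n) t0 t - RInt J1 t0 t)) as T.
        replace (X t - (x0 + RInt (I1 n) t0 t) + (RInt (I1 n) t0 t - RInt J1 t0 t))
          with (X t - (x0 + RInt J1 t0 t)) in T by ring. nra.
      - pose proof (Rabs_triang (Y t - (y0 + RInt (I2 n) t0 t)) (RInt (I2 n) t0 t - RInt J2 t0 t)) as T.
        replace (Y t - (y0 + RInt (I2 n) t0 t) + (RInt (I2 n) t0 t - RInt J2 t0 t))
          with (Y t - (y0 + RInt J2 t0 t)) in T by ring. nra. }
    split.
    - assert (Hz : Rabs (X t - (x0 + RInt J1 t0 t)) <= 0)
        by (apply (le_geom_zero _ (4 * r + 8 * r * h * L)); intros n; apply Main).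
      pose proof (Rabs_pos (X t - (x0 + RInt J1 t0 t))).
      assert (Rabs (X t - (x0 + RInt J1 t0 t)) = 0) by lra.
      apply Rabs_eq_0 in H0. lra.
    - assert (Hz : Rabs (Y t - (y0 + RInt J2 t0 t)) <= 0)
        by (apply (le_geom_zero _ (4 * r + 8 * r * h * L)); intros n; apply Main).
      pose proof (Rabs_pos (Y t - (y0 + RInt J2 t0 t))).
      assert (Rabs (Y t - (y0 + RInt J2 t0 t)) = 0) by lra.
      apply Rabs_eq_0 in H0. lra. }
  exists X, Y.
  assert (Ht0 : t0 <= t0 <= t0 + h) by lra.
  split; [destruct (Xint t0 Ht0) as [E _]; rewrite E, RInt_point; simpl; unfold zero; simpl; ring|].
  split; [destruct (Xint t0 Ht0) as [_ E]; rewrite E, RInt_point; simpl; unfold zero; simpl; ring|].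
  split.
  { intros t Ht. destruct (Xbd t) as [H1 H2]. assert (Hct : cl t = t) by (apply clamp_id; auto). rewrite Hct in H1, H2. split; nra. }
  split.
  { intros t Ht.
    assert (Hloc := loc_interval t0 (t0 + h) t Ht).
    split.
    - eapply is_derive_ext_loc; [|apply (RInt_derive_const J1 t0 x0 t); intros; apply HJ].
      eapply filter_imp; [|exact Hloc]. intros s Hs. simpl. symmetry. apply Xint. lra.
    - eapply is_derive_ext_loc; [|apply (RInt_derive_const J2 t0 y0 t); intros; apply HJ].
      eapply filter_imp; [|exact Hloc]. intros s Hs. simpl. symmetry. apply Xint. lra. }
  intros p q t1 Ht1 Hpq Hp0 Hq0.
  assert (Hpqc : forall t, t0 <= t < t1 -> continuity_pt p t /\ continuity_pt q t).
  { intros t Ht. destruct (Hpq t Ht) as [_ [D1 D2]]. split; apply cont_cpt.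
    - apply (ex_derive_continuous p t). eexists; eauto.
    - apply (ex_derive_continuous q t). eexists; eauto. }
  assert (HK : forall t, t0 <= t < t1 -> continuity_pt (fun s => F1 (p s) (q s)) t /\
                                          continuity_pt (fun s => F2 (p s) (q s)) t).
  { intros t Ht. destruct (Hpqc t Ht). apply Hcont; auto. apply Hpq; auto. }
  assert (Pint : forall t, t0 <= t < t1 -> p t = x0 + RInt (fun s => F1 (p s) (q s)) t0 t /\
                                            q t = y0 + RInt (fun s => F2 (p s) (q s)) t0 t).
  { intros t Ht. split.
    - rewrite (is_RInt_unique _ _ _ (minus (p t) (p t0))).
      + unfold minus, plus, opp; simpl. rewrite Hp0. ring.
      + apply (@is_RInt_derive R_CompleteNormedModule p); intros x Hx;
          rewrite Rmin_left, Rmax_right in Hx by lra.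
        * apply Hpq; lra.
        * apply cpt_cont. apply HK; lra.
    - rewrite (is_RInt_unique _ _ _ (minus (q t) (q t0))).
      + unfold minus, plus, opp; simpl. rewrite Hq0. ring.
      + apply (@is_RInt_derive R_CompleteNormedModule q); intros x Hx;
          rewrite Rmin_left, Rmax_right in Hx by lra.
        * apply Hpq; lra.
        * apply cpt_cont. apply HK; lra. }
  set (K0 := (a2 - a1) + (b2 - b1)).
  assert (Claim : forall n t, t0 <= t < t1 -> Rabs (p t - f n t) + Rabs (q t - g n t) <= K0 * (/2)^n).
  { induction n as [|n IH]; intros t Ht.
    - simpl pow. rewrite Ef0, Eg0. destruct (Hpq t Ht) as [[Hi1 Hi2] _].
      unfold K0. rewrite Rmult_1_r. apply Rplus_le_compat; apply Rabs_le; lra.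
    - destruct (Pint t Ht) as [P1 P2]. rewrite P1, P2, Ef, Eg.
      replace (x0 + RInt (fun s => F1 (p s) (q s)) t0 t - (x0 + RInt (I1 n) t0 t))
        with (RInt (fun s => F1 (p s) (q s)) t0 t - RInt (I1 n) t0 t) by ring.
      replace (y0 + RInt (fun s => F2 (p s) (q s)) t0 t - (y0 + RInt (I2 n) t0 t))
        with (RInt (fun s => F2 (p s) (q s)) t0 t - RInt (I2 n) t0 t) by ring.
      rewrite <- !RInt_minus'; try lra; try (intros; apply HI); try (intros; apply HK; lra).
      set (qq := (/2)^n). assert (Hq : 0 < qq) by (apply pow_lt; lra).
      assert (Hs : forall s, t0 <= s <= t -> Rabs (F1 (p s) (q s) - I1 n s) <= L * (K0 * qq)
                     /\ Rabs (F2 (p s) (q s) - I2 n s) <= L * (K0 * qq)).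
      { intros s Hs. assert (Hcs : cl s = s) by (apply clamp_id; lra).
        specialize (IH s ltac:(lra)).
        unfold I1, I2. rewrite Hcs.
        destruct (Hpq s ltac:(lra)) as [Hin _].
        pose proof (HB n s) as HBn. rewrite Hcs in HBn.
        destruct (Hlip _ _ _ _ Hin HBn) as [H1 H2].
        split; (eapply Rle_trans; [eassumption|]); apply Rmult_le_compat_l; unfold qq; lra. }
      assert (B1 : Rabs (RInt (fun x => F1 (p x) (q x) - I1 n x) t0 t) <= (t - t0) * (L * (K0 * qq))).
      { apply RInt_bound; try lra.
        - intros; apply continuity_pt_minus; [apply HK; lra|apply HI].
        - intros; apply Hs; auto. }
      assert (B2 : Rabs (RInt (fun x => F2 (p x) (q x) - I2 n x) t0 t) <= (t - t0) * (L * (K0 * qq))).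
      { apply RInt_bound; try lra.
        - intros; apply continuity_pt_minus; [apply HK; lra|apply HI].
        - intros; apply Hs; auto. }
      simpl pow. fold qq.
      assert (0 <= K0) by (unfold K0; lra).
      assert ((t - t0) * (L * (K0 * qq)) <= K0 * qq / 4).
      { assert (0 <= t - t0 <= h) by lra.
        assert (HLt : 4 * L * (t - t0) <= 1) by nra.
        assert (0 <= K0 * qq) by nra. nra. }
      lra. }
  intros t Ht.
  assert (Hclt : cl t = t) by (apply clamp_id; lra).
  assert (Main : forall n, Rabs (p t - X t) <= (K0 + 4 * r) * (/2)^n /\ Rabs (q t - Y t) <= (K0 + 4 * r) * (/2)^n).
  { intros n. specialize (Claim n t Ht). pose proof (XB n t) as X1. pose proof (YB n t) as Y1.
    rewrite Hclt in X1, Y1. rewrite Rabs_minus_sym in X1, Y1.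
    pose proof (Rabs_pos (p t - f n t)). pose proof (Rabs_pos (q t - g n t)).
    pose proof (Rabs_triang (p t - f n t) (f n t - X t)) as T1.
    pose proof (Rabs_triang (q t - g n t) (g n t - Y t)) as T2.
    replace (p t - f n t + (f n t - X t)) with (p t - X t) in T1 by ring.
    replace (q t - g n t + (g n t - Y t)) with (q t - Y t) in T2 by ring.
    split; lra. }
  split.
  - assert (Hz : Rabs (p t - X t) <= 0) by (apply (le_geom_zero _ (K0 + 4 * r)); intros n; apply Main).
    pose proof (Rabs_pos (p t - X t)). assert (Rabs (p t - X t) = 0) by lra.
    apply Rabs_eq_0 in H0. lra.
  - assert (Hz : Rabs (q t - Y t) <= 0) by (apply (le_geom_zero _ (K0 + 4 * r)); intros n; apply Main).
    pose proof (Rabs_pos (q t - Y t)). assert (Rabs (q t - Y t) = 0) by lra.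
    apply Rabs_eq_0 in H0. lra.
Qed.

Lemma Rabs_le' a b : - b <= a <= b -> Rabs a <= b.
Proof. unfold Rabs; destruct (Rcase_abs a); lra. Qed.

Lemma lin_bound X Y u w L : Rabs X <= L -> Rabs Y <= L ->
  Rabs (X * u + Y * w) <= L * (Rabs u + Rabs w).
Proof.
  intros HX HY. eapply Rle_trans; [apply Rabs_triang|]. rewrite !Rabs_mult.
  pose proof (Rabs_pos u). pose proof (Rabs_pos w). nra.
Qed.

Definition Sc (b1 b2 : R) : R := (/ b1 + b2) / 2.
Definition Mc (a2 b1 b2 : R) : R := a2 * (a2 * Sc b1 b2 + Sc b1 b2) + a2 * (1 + b2^2) / 4 + (1 + b2^2) / 2 + 1.
Definition Lc (a2 b1 b2 : R) : R :=
  (2 * a2 * Sc b1 b2 + Sc b1 b2) + (a2^2 + a2) * (/ b1 ^ 2 + 1) + (1 + b2^2) / 4 + 2 * b2 * (a2 / 4 + 1 / 2) + 1.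

Lemma good_Fp_Fv a1 a2 b1 b2 : 0 <= a1 <= a2 -> 0 < b1 <= b2 ->
  good_field Fp Fv a1 a2 b1 b2 (Lc a2 b1 b2) (Mc a2 b1 b2).
Proof.
  intros Ha Hb.
  set (ib := / b1).
  assert (Hib : 0 < ib) by (apply Rinv_0_lt_compat; lra).
  assert (Hinv : forall b, b1 <= b <= b2 -> 0 < / b <= ib).
  { intros b Hb'. split; [apply Rinv_0_lt_compat; lra|]. apply Rinv_le_contravar; lra. }
  set (S := Sc b1 b2).
  assert (HS : 0 < S) by (unfold S, Sc; fold ib; lra).
  assert (HR : forall b, b1 <= b <= b2 -> - S <= Rf b <= S /\ 0 <= Qf b <= S).
  { intros b Hb'. destruct (Hinv b Hb'). unfold Rf, Qf, S, Sc. fold ib. lra. }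
  assert (HL : 0 < Lc a2 b1 b2).
  { unfold Lc. fold S. assert (0 <= / b1 ^ 2) by (apply Rlt_le, Rinv_0_lt_compat; nra). nra. }
  assert (HM : 0 < Mc a2 b1 b2) by (unfold Mc; fold S; nra).
  split; [auto|split; [auto|split; [|split]]].
  - intros f g t Hf Hg [_ Hgt]. assert (g t <> 0) by lra.
    split; unfold Fp, Fv, Rf, Qf; reg.
  - intros a b [Ha' Hb']. destruct (HR b Hb') as [[R1 R2] [Q1 Q2]].
    split; apply Rabs_le'; unfold Fp, Fv, Mc; fold S.
    + assert (HX : - S * (a2 + 1) <= a * Rf b - Qf b <= a2 * S) by (split; nra).
      assert (0 <= b2 ^ 2) by nra.
      assert (a * (a * Rf b - Qf b) <= a2 * (a2 * S)).
      { apply Rle_trans with (a * (a2 * S)); [apply Rmult_le_compat_l; lra|].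
        apply Rmult_le_compat_r; nra. }
      assert (- (a2 * (S * (a2 + 1))) <= a * (a * Rf b - Qf b)).
      { apply Rle_trans with (a * (- S * (a2 + 1))); [|apply Rmult_le_compat_l; lra]. nra. }
      split; nra.
    + assert (b ^ 2 <= b2 ^ 2) by nra. assert (0 <= b^2) by nra.
      assert (0 <= a * (1 + b^2) <= a2 * (1 + b2^2)) by (split; nra).
      assert (0 <= a2 * (a2 * S + S)) by nra.
      split; nra.
  - intros a b a' b' [Ha' Hb'] [Ha'' Hb''].
    destruct (HR b Hb') as [[R1 R2] [Q1 Q2]].
    destruct (Hinv b Hb') as [I1 I2]. destruct (Hinv b' Hb'') as [I3 I4].
    assert (Hbb : 0 < / (b * b') <= / b1 ^ 2).
    { split; [apply Rinv_0_lt_compat; nra|]. apply Rinv_le_contravar; [nra|]. nra. }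
    assert (0 <= / b1 ^ 2) by lra.
    split.
    + replace (Fp a b - Fp a' b') with
        (((a + a') * Rf b - Qf b) * (a - a') +
         (- a'^2 * (/ (b * b') + 1) / 2 - a' * (1 - / (b * b')) / 2) * (b - b')).
      2:{ unfold Fp, Rf, Qf. field. lra. }
      set (u := / (b * b')) in *. set (ib2 := / b1 ^ 2) in *.
      assert (Hrest : 0 <= (1 + b2^2) / 4 + 2 * b2 * (a2 / 4 + 1 / 2)) by nra.
      assert (Hpos1 : 0 <= (a2^2 + a2) * (ib2 + 1)) by nra.
      assert (Hpos2 : 0 <= 2 * a2 * S + S) by nra.
      assert (HX : - (2 * a2 * S + S) <= (a + a') * Rf b - Qf b <= 2 * a2 * S + S).
      { assert (0 <= a + a' <= 2 * a2) by lra. split; nra. }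
      assert (HY : - ((a2^2 + a2) * (ib2 + 1)) <= - a'^2 * (u + 1) / 2 - a' * (1 - u) / 2
                   <= (a2^2 + a2) * (ib2 + 1)).
      { assert (0 <= a'^2 <= a2^2) by (split; nra).
        assert (0 <= a'^2 * (u + 1) <= a2^2 * (ib2 + 1)) by (split; nra).
        assert (- (a2 * ib2) <= a' * (1 - u) <= a2) by (split; nra).
        split; nra. }
      apply lin_bound; apply Rabs_le'; unfold Lc; fold S; fold ib2; lra.
    + replace (Fv a b - Fv a' b') with
        ((- (1 + b^2) / 4) * (a - a') + (- (a' / 4) * (b + b') - (b + b') / 2) * (b - b')).
      2:{ unfold Fv. field. }
      apply lin_bound; apply Rabs_le'; unfold Lc; fold S; split; nra.
Qed.

Lemma W_lower (p v p0 Mp : R) : 1 < p0 -> p0 <= p <= Mp -> 0 < v < 1 ->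
  let k := (p0 - 1) / Mp in
  - ((Mp + 1) / 2 + k * (Mp / 4 + 1 / 2)) <= Fp p v / p + k * (Fv p v / v).
Proof.
  intros Hp0 Hp Hv k.
  assert (HMp : 0 < Mp) by lra.
  assert (Hk : 0 < k) by (unfold k; apply Rdiv_lt_0_compat; lra).
  assert (HkM : k * Mp = p0 - 1) by (unfold k; field; lra).
  set (C1 := (Mp + 1) / 2 + k * (Mp / 4 + 1 / 2)).
  set (N := (p * (1 - v^2) - (1 + v^2)) / 2 + k * (- p * (1 + v^2) / 4 + (1 - v^2) / 2)).
  assert (HE : Fp p v / p + k * (Fv p v / v) = N / v).
  { unfold N, Fp, Fv, Rf, Qf. field. lra. }
  rewrite HE.
  assert (HN : - C1 * v^2 <= N).
  { unfold N, C1.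
    assert (H1 : k * p <= p0 - 1) by nra.
    assert (H2 : 0 <= v^2) by nra.
    assert (H3 : (p + 1) / 2 + k * (p / 4 + 1 / 2) <= (Mp + 1) / 2 + k * (Mp / 4 + 1 / 2)) by nra.
    assert (H4 : 0 <= (p - 1) / 2 - k * p / 4 + k / 2) by nra.
    nra. }
  assert (HC1 : 0 < C1) by (unfold C1; nra).
  apply (Rmult_le_reg_r v); [lra|]. unfold Rdiv. rewrite Rmult_assoc, Rinv_l, Rmult_1_r by lra.
  assert (C1 * v^2 <= C1 * v) by (apply Rmult_le_compat_l; [lra|simpl; nra]). lra.
Qed.

Lemma v_lower p v Tf Mp : is_solution p v (Finite Tf) -> in_Omega_b (v 0) (p 0) ->
  (forall t, 0 <= t < Tf -> p t <= Mp) ->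
  exists vlo, 0 < vlo /\ forall t, 0 <= t < Tf -> vlo <= v t.
Proof.
  intros Hsol Hom HMp.
  pose proof (invariance p v _ Hsol Hom) as Hinv.
  destruct (sol_basic p v _ Hsol) as [Hc Hd].
  destruct (Omega_init _ _ Hom) as [Hv0 [Hp0 [_ Hp01]]].
  assert (HTf : 0 < Tf) by (destruct Hsol as [HT _]; simpl in HT; auto).
  set (p0 := p 0) in *.
  assert (Hpb : forall t, 0 <= t < Tf -> p0 <= p t <= Mp).
  { intros t Ht. split; [|apply HMp; auto].
    destruct (Req_dec t 0) as [->|Hne]; [unfold p0; lra|].
    apply Rlt_le, (p_incr p v _ Hsol Hom); simpl; lra. }
  assert (HvB : forall t, 0 <= t < Tf -> 0 < v t < 1).
  { intros t Ht. destruct (Hinv t) as [Hv [Hp HH]]; [lra|simpl; lra|].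
    destruct (cc_pos_lt1 _ _ Hv Hp HH). lra. }
  assert (HMp0 : p0 <= Mp) by (apply (Hpb 0); lra).
  set (k := (p0 - 1) / Mp).
  assert (Hk : 0 < k) by (unfold k; apply Rdiv_lt_0_compat; lra).
  set (C1 := (Mp + 1) / 2 + k * (Mp / 4 + 1 / 2)).
  assert (HC1 : 0 < C1) by (unfold C1; nra).
  set (W := fun t => ln (ext0 p t) + k * ln (ext0 v t)).
  assert (HW : forall t, 0 <= t < Tf -> W 0 - C1 * t <= W t).
  { intros t Ht. destruct (Req_dec t 0) as [->|Hne]; [lra|].
    assert (Hlt : forall x, 0 <= x <= t -> Rbar_lt x (Finite Tf)) by (intros; simpl; lra).
    pose proof (deriv_ge_lin W (fun x => Fp (ext0 p x) (ext0 v x) / ext0 p x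
                                        + k * (Fv (ext0 p x) (ext0 v x) / ext0 v x)) 0 t (- C1)) as Hm.
    assert (W 0 + - C1 * (t - 0) <= W t); [|lra].
    apply Hm; [lra| | |].
    - intros x Hx. destruct (Hd x ltac:(lra) (Hlt x ltac:(lra))) as [Dp Dv].
      destruct (HvB x ltac:(lra)) as [Hvx _]. destruct (Hinv x ltac:(lra) (Hlt x ltac:(lra))) as [_ [Hpx _]].
      unfold W. auto_derive.
      + repeat split; try (eexists; eassumption); rewrite ext0_pos; lra.
      + change (fun x0 => ext0 p x0) with (ext0 p). change (fun x0 => ext0 v x0) with (ext0 v).
        rewrite (is_derive_unique _ _ _ Dp), (is_derive_unique _ _ _ Dv).
        rewrite !ext0_pos by lra. field. lra.
    - intros x Hx. destruct (Hc x ltac:(lra) (Hlt x ltac:(lra))) as [Cp Cv].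
      destruct (HvB x ltac:(lra)) as [Hvx _]. destruct (Hinv x ltac:(lra) (Hlt x ltac:(lra))) as [_ [Hpx _]].
      unfold W. apply continuity_pt_plus.
      + apply (continuity_pt_comp (ext0 p) ln); auto.
        apply derivable_continuous_pt. exists (/ ext0 p x). apply derivable_pt_lim_ln. rewrite ext0_pos; lra.
      + apply continuity_pt_scal. apply (continuity_pt_comp (ext0 v) ln); auto.
        apply derivable_continuous_pt. exists (/ ext0 v x). apply derivable_pt_lim_ln. rewrite ext0_pos; lra.
    - intros x Hx. rewrite !ext0_pos by lra. apply W_lower; auto; [apply Hpb|apply HvB]; lra. }
  set (m := (W 0 - C1 * Tf - ln Mp) / k).
  exists (exp m). split; [apply exp_pos|].
  intros t Ht. destruct (HvB t Ht) as [Hvt _]. destruct (Hpb t Ht) as [Hpt1 Hpt2].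
  specialize (HW t Ht).
  assert (HW' : W t = ln (p t) + k * ln (v t)) by (unfold W; rewrite !ext0_pos by lra; auto).
  rewrite HW' in HW.
  assert (Hlnp : ln (p t) <= ln Mp).
  { destruct (Req_dec (p t) Mp) as [->|Hne]; [lra|]. apply Rlt_le, ln_increasing; lra. }
  assert (Hm : m <= ln (v t)).
  { unfold m. apply (Rmult_le_reg_r k); auto. unfold Rdiv. rewrite Rmult_assoc, Rinv_l, Rmult_1_r by lra.
    assert (C1 * t <= C1 * Tf) by (apply Rmult_le_compat_l; lra). nra. }
  rewrite <- (exp_ln (v t)) by lra.
  destruct (Req_dec m (ln (v t))) as [->|Hne]; [lra|]. apply Rlt_le, exp_increasing. lra.
Qed.

Lemma no_bound p v Tf Mp : is_maximal_solution p v (Finite Tf) -> in_Omega_b (v 0) (p 0) ->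
  (forall t, 0 <= t < Tf -> p t <= Mp) -> False.
Proof.
  intros [Hsol Hmax] Hom HMp.
  destruct (v_lower p v Tf Mp Hsol Hom HMp) as [vlo [Hvlo Hvl]].
  pose proof (invariance p v _ Hsol Hom) as Hinv.
  destruct (Omega_init _ _ Hom) as [Hv0 [Hp0 [_ Hp01]]].
  assert (HTf : 0 < Tf) by (destruct Hsol as [HT _]; simpl in HT; auto).
  set (p0 := p 0) in *.
  assert (Hpb : forall t, 0 <= t < Tf -> p0 <= p t <= Mp).
  { intros t Ht. split; [|apply HMp; auto].
    destruct (Req_dec t 0) as [->|Hne]; [unfold p0; lra|].
    apply Rlt_le, (p_incr p v _ Hsol Hom); simpl; lra. }
  assert (HvB : forall t, 0 <= t < Tf -> vlo <= v t < 1).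
  { intros t Ht. destruct (Hinv t) as [Hv [Hp HH]]; [lra|simpl; lra|].
    destruct (cc_pos_lt1 _ _ Hv Hp HH). split; auto. }
  assert (Hvlo1 : vlo < 1) by (destruct (HvB 0); lra).
  set (a1 := p0 / 2). set (a2 := Mp + 1). set (b1 := vlo / 2). set (b2 := 2).
  assert (HMp0 : p0 <= Mp) by (apply (Hpb 0); lra).
  assert (Hgood := good_Fp_Fv a1 a2 b1 b2 ltac:(unfold a1, a2; lra) ltac:(unfold b1, b2; lra)).
  set (L := Lc a2 b1 b2) in *. set (M := Mc a2 b1 b2) in *.
  destruct Hgood as [HL [HM Hrest]].
  set (r := Rmin (p0 / 2) (vlo / 2)).
  assert (Hr1 := Rmin_l (p0/2) (vlo/2)). assert (Hr2 := Rmin_r (p0/2) (vlo/2)). fold r in Hr1, Hr2.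
  assert (Hr : 0 < r) by (apply Rmin_glb_lt; lra).
  set (h := Rmin (r / M) (/ (4 * L))).
  assert (Hh1 := Rmin_l (r / M) (/ (4 * L))). assert (Hh2 := Rmin_r (r / M) (/ (4 * L))). fold h in Hh1, Hh2.
  assert (Hh : 0 < h) by (apply Rmin_glb_lt; [apply Rdiv_lt_0_compat|apply Rinv_0_lt_compat]; lra).
  assert (HMh : M * h <= r).
  { apply Rle_trans with (M * (r / M)); [apply Rmult_le_compat_l; lra|]. right; field; lra. }
  assert (HLh : 4 * L * h <= 1).
  { apply Rle_trans with (4 * L * / (4 * L)); [apply Rmult_le_compat_l; lra|]. right; field; lra. }
  set (t0 := Rmax (Tf / 2) (Tf - h / 2)).
  assert (Ht01 := Rmax_l (Tf/2) (Tf - h/2)). assert (Ht02 := Rmax_r (Tf/2) (Tf - h/2)). fold t0 in Ht01, Ht02.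
  assert (Ht0 : t0 < Tf) by (apply Rmax_lub_lt; lra).
  destruct (Hpb t0 ltac:(lra)). destruct (HvB t0 ltac:(lra)).
  destruct (picard Fp Fv a1 a2 b1 b2 L M t0 h (p t0) (v t0) r
              (conj HL (conj HM Hrest)) Hr Hh HMh HLh) as [X [Y [HX0 [HY0 [Hbd [Hder Huniq]]]]]];
    try (unfold a1, a2, b1, b2; lra).
  assert (HinB : forall t, t0 <= t < Tf -> inB a1 a2 b1 b2 (p t) (v t)).
  { intros t Ht. destruct (Hpb t ltac:(lra)). destruct (HvB t ltac:(lra)). unfold inB, a1, a2, b1, b2; lra. }
  destruct Hsol as [HT [Hvnz [Hd [Hpr Hvr]]]].
  assert (Hagree : forall t, t0 <= t < Tf -> p t = X t /\ v t = Y t).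
  { apply (Huniq p v Tf); auto; [lra|].
    intros t Ht. split; [apply HinB; auto|]. apply Hd; simpl; lra. }
  set (pp := fun t => if Rlt_dec t Tf then p t else X t).
  set (vv := fun t => if Rlt_dec t Tf then v t else Y t).
  apply (Hmax (Finite (t0 + h)) pp vv).
  - simpl; lra.
  - split; [simpl; lra|]. split; [|split; [|split]].
    + intros t Ht Hth. simpl in Hth. unfold vv. destruct (Rlt_dec t Tf).
      * apply Hvnz; simpl; auto.
      * destruct (Hbd t ltac:(lra)) as [_ HY]. apply Rabs_def2b in HY. lra.
    + intros t Ht Hth. simpl in Hth. destruct (Rlt_dec t Tf) as [Hlt|Hge].
      * assert (Hloc : locally t (fun s => p s = pp s /\ v s = vv s)).
        { eapply filter_imp; [|apply (loc_interval (t - 1) Tf t); lra].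
          intros s Hs. unfold pp, vv. destruct (Rlt_dec s Tf); [auto|lra]. }
        assert (Hpt : pp t = p t) by (unfold pp; destruct (Rlt_dec t Tf); [auto|lra]).
        assert (Hvt : vv t = v t) by (unfold vv; destruct (Rlt_dec t Tf); [auto|lra]).
        rewrite Hpt, Hvt. destruct (Hd t Ht) as [D1 D2]; [simpl; auto|].
        split; (eapply is_derive_ext_loc; [|eassumption]); (eapply filter_imp; [|exact Hloc]);
          intros s [Hs1 Hs2]; auto.
      * assert (Hloc : locally t (fun s => X s = pp s /\ Y s = vv s)).
        { eapply filter_imp; [|apply (loc_interval t0 (t0 + h) t); lra].
          intros s Hs. unfold pp, vv. destruct (Rlt_dec s Tf); [|auto].
          destruct (Hagree s ltac:(lra)). auto. }
        assert (Hpt : pp t = X t) by (unfold pp; destruct (Rlt_dec t Tf); [lra|auto]).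
        assert (Hvt : vv t = Y t) by (unfold vv; destruct (Rlt_dec t Tf); [lra|auto]).
        rewrite Hpt, Hvt. destruct (Hder t) as [D1 D2]; [lra|].
        split; (eapply is_derive_ext_loc; [|eassumption]); (eapply filter_imp; [|exact Hloc]);
          intros s [Hs1 Hs2]; auto.
    + assert (E0 : pp 0 = p 0) by (unfold pp; destruct (Rlt_dec 0 Tf); [auto|lra]).
      rewrite E0. eapply filterlim_ext_loc; [|exact Hpr].
      exists (mkposreal Tf HTf). intros y Hy _. unfold pp. destruct (Rlt_dec y Tf); auto.
      exfalso. unfold ball in Hy; simpl in Hy; unfold AbsRing_ball, abs, minus, plus, opp in Hy; simpl in Hy.
      apply Rabs_def2 in Hy. lra.
    + assert (E0 : vv 0 = v 0) by (unfold vv; destruct (Rlt_dec 0 Tf); [auto|lra]).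
      rewrite E0. eapply filterlim_ext_loc; [|exact Hvr].
      exists (mkposreal Tf HTf). intros y Hy _. unfold vv. destruct (Rlt_dec y Tf); auto.
      exfalso. unfold ball in Hy; simpl in Hy; unfold AbsRing_ball, abs, minus, plus, opp in Hy; simpl in Hy.
      apply Rabs_def2 in Hy. lra.
  - intros t Ht HtT. simpl in HtT. unfold pp, vv. destruct (Rlt_dec t Tf); [auto|lra].
Qed.

Lemma Nl2_ge p v : 0 < p -> 0 < v -> p <= Nl2 p v.
Proof.
  intros Hp Hv. unfold Nl2.
  assert (HPI := PI2_3_2).
  assert (Hinv : 2 <= / v + v).
  { assert (/ v + v - 2 = (1 - v)^2 / v) by (field; lra).
    assert (0 <= (1 - v)^2 / v) by (apply Rdiv_le_0_compat; [apply pow2_ge_0|lra]). lra. }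
  rewrite <- (sqrt_pow2 p) at 1 by lra.
  apply sqrt_le_1_alt.
  assert (0 <= p ^ 2) by nra.
  assert (2 * PI * p ^ 2 * (/ v + v) >= 2 * PI * p^2 * 2) by (apply Rle_ge, Rmult_le_compat_l; nra).
  nra.
Qed.

Lemma Nw_ge p v : 0 < p -> 0 < v -> p <= Nwiener p v.
Proof.
  intros Hp Hv. unfold Nwiener. rewrite Rabs_right by lra.
  assert (1 <= Rmax (/ v) v).
  { destruct (Rle_lt_dec v 1).
    - eapply Rle_trans; [|apply Rmax_l]. rewrite <- Rinv_1. apply Rinv_le_contravar; lra.
    - eapply Rle_trans; [|apply Rmax_r]. lra. }
  nra.
Qed.

Lemma at_left_interval (Tf : R) : 0 < Tf -> at_left Tf (fun t => 0 < t < Tf).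
Proof.
  intros HTf. unfold at_left, within. exists (mkposreal Tf HTf). intros y Hy Hylt.
  unfold ball in Hy; simpl in Hy; unfold AbsRing_ball, abs, minus, plus, opp in Hy; simpl in Hy.
  apply Rabs_def2 in Hy. lra.
Qed.

Theorem theorem3p9 (p v : R -> R) (T : Rbar) :
  is_maximal_solution p v T ->
  in_Omega_b (v 0) (p 0) ->
  let D := p 0 / (lam * p 0 + mu) in
  (forall t, 0 < t -> Rbar_lt (Finite t) T ->
     0 < 1 - lam * D * exp (mu * t) /\
     p t > mu * D * exp (mu * t) / (1 - lam * D * exp (mu * t))) /\
  exists tc : R,
    T = Finite tc /\
    0 < tc < - (/ mu) * ln (lam * D) /\
    filterlim p (at_left tc) (Rbar_locally p_infty) /\
    filterlim (fun t => Nl2 (p t) (v t)) (at_left tc) (Rbar_locally p_infty) /\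
    filterlim (fun t => Nwiener (p t) (v t)) (at_left tc) (Rbar_locally p_infty).
Proof.
  intros Hmax Hom D.
  pose proof Hmax as [Hsol _].
  split; [exact (lower_bound p v T Hsol Hom)|].
  destruct (T_finite p v T Hsol Hom) as [Tf [HT HTf]]. fold D in HTf.
  exists Tf. split; auto. split; auto. subst T.
  assert (Hblow : filterlim p (at_left Tf) (Rbar_locally p_infty)).
  { destruct (Classical_Prop.classic (exists Mp, forall t, 0 <= t < Tf -> p t <= Mp)) as [[Mp HMp]|Hno].
    - exfalso. apply (no_bound p v Tf Mp); auto.
    - intros P [M HP].
      assert (Hex : exists t, 0 <= t < Tf /\ M < p t).
      { destruct (Classical_Prop.classic (exists t, 0 <= t < Tf /\ M < p t)) as [|Hn]; auto.
        exfalso. apply Hno. exists M. intros t Ht.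
        destruct (Rle_lt_dec (p t) M); auto. exfalso; apply Hn; exists t; auto. }
      destruct Hex as [t [Ht Hpt]].
      unfold filtermap, at_left, within.
      assert (Hd : 0 < Tf - t) by lra.
      exists (mkposreal _ Hd). intros y Hy Hylt. simpl in Hy.
      unfold ball in Hy; simpl in Hy; unfold AbsRing_ball, abs, minus, plus, opp in Hy; simpl in Hy.
      apply Rabs_def2 in Hy. apply HP.
      assert (p t < p y) by (apply (p_incr p v _ Hsol Hom); simpl; lra). lra. }
  assert (Hpos : at_left Tf (fun t => 0 < p t /\ 0 < v t)).
  { eapply filter_imp; [|apply at_left_interval; lra].
    intros t Ht. destruct (invariance p v _ Hsol Hom t) as [Hv [Hp _]]; [lra|simpl; lra|]. auto. }
  split; auto. split.
  - apply (filterlim_ge_p_infty p); auto.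
    eapply filter_imp; [|exact Hpos]. intros t [Hp Hv]. apply Nl2_ge; auto.
  - apply (filterlim_ge_p_infty p); auto.
    eapply filter_imp; [|exact Hpos]. intros t [Hp Hv]. apply Nw_ge; auto.
Qed.
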